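(* Let $\gamma_a,\gamma_s>0$, $\sigma_B>0$, $q>0$, $\varepsilon_a\in(0,2)$, and let $\beta_s$ be the piecewise linear coalbedo described in the context. Consider the system \[ \gamma_a T_a'=\varepsilon_a\sigma_B|T_s|^3T_s-2\varepsilon_a\sigma_B|T_a|^3T_a,\qquad \gamma_s T_s'=-\sigma_B|T_s|^3T_s+\varepsilon_a\sigma_B|T_a|^3T_a+q\beta_s(T_s). \] Assume that the equation $\sigma_B(1-\frac{\varepsilon_a}{2})T^4=q\beta_s(T)$ has exactly three solutions $T^*_{s,1}\in(0,T_{s,-})$, $T^*_{s,2}\in(T_{s,-},T_{s,+})$, $T^*_{s,3}>T_{s,+}$, and that the equation $\sigma_B T^4=q\beta_s(T)$ has exactly one positive solution. Let $\mathcal Q=(0,+\infty)^2$, \[ \mathcal Q_4=\{(T_a,T_s)\in\mathcal Q:\ T_s<2^{1/4}T_a,\ -\sigma_B T_s^4+\varepsilon_a\sigma_B T_a^4+q\beta_s(T_s)>0\}, \] and $\mathcal C_{\mathrm{right}}=\partial\mathcal Q_4\cap\mathcal Q$. Then for every initial condition in $\mathcal C_{\mathrm{right}}$ which is not an equilibrium point, the solution followed backward in time reaches the horizontal axis: there exists $\tau>0$ such that $T_s(-\tau)=0$ and $T_a(-\tau)>0$.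
   Context: The coalbedo is $\beta_s(T)=\beta_{s,-}$ for $T\le T_{s,-}$, $\beta_s(T)=\beta_{s,-}+(\beta_{s,+}-\beta_{s,-})\frac{T-T_{s,-}}{T_{s,+}-T_{s,-}}$ for $T\in[T_{s,-},T_{s,+}]$, and $\beta_s(T)=\beta_{s,+}$ for $T\ge T_{s,+}$, where $T_{s,+}>T_{s,-}>0$ and $\beta_{s,+}>\beta_{s,-}>0$. The equilibrium points of the system in $[0,\infty)^2$ are then $(2^{-1/4}T^*_{s,i},T^*_{s,i})$, $i=1,2,3$. *)

(* Defs.v *)
From Stdlib Require Import Reals Lra.
Open Scope R_scope.

Definition coalbedo (Tm Tp bm bp T : R) : R :=
  if Rle_dec T Tm then bm
  else if Rle_dec Tp T then bp
  else bm + (bp - bm) * ((T - Tm) / (Tp - Tm)).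

(* Right-hand sides of the system (before dividing by gamma_a, gamma_s). *)
Definition Fa (eps sB Ta Ts : R) : R :=
  eps * sB * (Rabs Ts ^ 3 * Ts) - 2 * eps * sB * (Rabs Ta ^ 3 * Ta).

Definition Fs (eps sB q Tm Tp bm bp Ta Ts : R) : R :=
  - sB * (Rabs Ts ^ 3 * Ts) + eps * sB * (Rabs Ta ^ 3 * Ta)
  + q * coalbedo Tm Tp bm bp Ts.

Definition inQ (Ta Ts : R) : Prop := 0 < Ta /\ 0 < Ts.

Definition inQ4 (eps sB q Tm Tp bm bp Ta Ts : R) : Prop :=
  inQ Ta Ts /\ Ts < Rpower 2 (1/4) * Ta /\
  - sB * Ts ^ 4 + eps * sB * Ta ^ 4 + q * coalbedo Tm Tp bm bp Ts > 0.

(* Topological boundary in R^2 (product / max-metric topology, which is the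
   usual topology of R^2): every neighbourhood meets both S and its complement. *)
Definition in_boundary (S : R -> R -> Prop) (x y : R) : Prop :=
  forall e, 0 < e ->
    (exists u v, Rabs (u - x) < e /\ Rabs (v - y) < e /\ S u v) /\
    (exists u v, Rabs (u - x) < e /\ Rabs (v - y) < e /\ ~ S u v).

(* Main.v *)
Require Import Defs.
From Stdlib Require Import Reals Lra Lia Arith Factorial Classical.
From Coquelicot Require Import Coquelicot.
Open Scope R_scope.

Lemma lip_cont (g : R -> R) K :
  (forall x y, Rabs (g x - g y) <= K * Rabs (x - y)) -> forall x, continuous g x.
Proof.
  intros H x.
  apply continuity_pt_filterlim.
  intros e He.
  exists (e / (Rabs K + 1)). split.
  { apply Rdiv_lt_0_compat; [lra|]. pose proof (Rabs_pos K); lra. }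
  intros y [_ Hy]. unfold R_dist in *. simpl in *. unfold R_dist in *.
  specialize (H y x).
  pose proof (Rabs_pos K). pose proof (Rabs_pos (y - x)).
  assert (K * Rabs (y - x) <= (Rabs K + 1) * Rabs (y-x)).
  { apply Rmult_le_compat_r; [lra|]. pose proof (Rle_abs K); lra. }
  assert ((Rabs K + 1) * Rabs (y - x) < (Rabs K + 1) * (e / (Rabs K + 1))).
  { apply Rmult_lt_compat_l; lra. }
  replace ((Rabs K + 1) * (e / (Rabs K + 1))) with e in * by (field; lra).
  lra.
Qed.

Lemma lip_ex_RInt (g : R -> R) K a b :
  (forall x y, Rabs (g x - g y) <= K * Rabs (x - y)) -> ex_RInt g a b.
Proof.
  intros H. apply (ex_RInt_continuous (V:=R_CompleteNormedModule)). intros z _. eapply lip_cont; eauto.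
Qed.

Lemma RInt_bound0 (g : R -> R) K t :
  (forall a b, ex_RInt g a b) ->
  (forall s, Rabs s <= Rabs t -> Rabs (g s) <= K) ->
  Rabs (RInt g 0 t) <= K * Rabs t.
Proof.
  intros Hex Hb.
  destruct (Rle_dec 0 t) as [Ht|Ht].
  - rewrite (Rabs_pos_eq t Ht).
    replace (K * t) with ((t - 0) * K) by ring.
    apply abs_RInt_le_const; auto.
    intros s Hs. apply Hb. rewrite !Rabs_pos_eq; lra.
  - rewrite (Rabs_left t) by lra.
    rewrite <- (opp_RInt_swap g t 0) by auto.
    change (Rabs (- RInt g t 0) <= K * - t).
    rewrite Rabs_Ropp.
    replace (K * - t) with ((0 - t) * K) by ring.
    apply abs_RInt_le_const; auto; [lra|].
    intros s Hs. apply Hb. rewrite (Rabs_left t) by lra.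
    destruct (Req_dec s 0). subst. rewrite Rabs_R0; lra.
    rewrite Rabs_left; lra.
Qed.

Lemma fact_S_R n : INR (fact (S n)) = INR (S n) * INR (fact n).
Proof. rewrite fact_simpl, mult_INR. reflexivity. Qed.

Lemma RInt_powpos c n t : 0 <= t ->
  RInt (fun s => c * s ^ n / INR (fact n)) 0 t = c * t ^ (S n) / INR (fact (S n)).
Proof.
  intros Ht.
  apply is_RInt_unique.
  pose proof (INR_fact_neq_0 n).
  pose proof (INR_fact_neq_0 (S n)).
  assert (HS : INR (S n) <> 0) by (apply not_0_INR; lia).
  set (F := fun s => c * s ^ S n / INR (fact (S n))).
  replace (c * t ^ S n / INR (fact (S n))) with (minus (F t) (F 0)).
  apply (is_RInt_derive (V:=R_CompleteNormedModule) F).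
  - intros x _. unfold F. auto_derive. auto. change (match n with 0%nat => 1 | S _ => INR n + 1 end) with (INR (S n)). change (fact n + n * fact n)%nat with (fact (S n)). rewrite fact_S_R. field. auto.
  - intros x _. apply (@ex_derive_continuous R_AbsRing R_NormedModule). auto_derive. auto.
  - unfold F, minus, plus, opp. simpl. field. auto.
Qed.

Lemma RInt_powneg c n t : t <= 0 ->
  RInt (fun s => c * (- s) ^ n / INR (fact n)) t 0 = c * (- t) ^ (S n) / INR (fact (S n)).
Proof.
  intros Ht.
  apply is_RInt_unique.
  pose proof (INR_fact_neq_0 n).
  pose proof (INR_fact_neq_0 (S n)).
  assert (HS : INR (S n) <> 0) by (apply not_0_INR; lia).
  set (F := fun s => - (c * (- s) ^ S n / INR (fact (S n)))).
  replace (c * (- t) ^ S n / INR (fact (S n))) with (minus (F 0) (F t)).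
  apply (is_RInt_derive (V:=R_CompleteNormedModule) F).
  - intros x _. unfold F. auto_derive. auto. change (match n with 0%nat => 1 | S _ => INR n + 1 end) with (INR (S n)). change (fact n + n * fact n)%nat with (fact (S n)). rewrite fact_S_R. field. auto.
  - intros x _. apply (@ex_derive_continuous R_AbsRing R_NormedModule). auto_derive. auto.
  - unfold F, minus, plus, opp. simpl. field. auto.
Qed.

Lemma poly_ex_RInt c n a b : ex_RInt (fun s => c * s ^ n / INR (fact n)) a b.
Proof.
  apply (ex_RInt_continuous (V:=R_CompleteNormedModule)). intros z _.
  apply (@ex_derive_continuous R_AbsRing R_NormedModule). auto_derive. auto.
Qed.

Lemma polyneg_ex_RInt c n a b : ex_RInt (fun s => c * (- s) ^ n / INR (fact n)) a b.
Proof.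
  apply (ex_RInt_continuous (V:=R_CompleteNormedModule)). intros z _.
  apply (@ex_derive_continuous R_AbsRing R_NormedModule). auto_derive. auto.
Qed.

Lemma RInt_pow_bound (g : R -> R) c n t :
  (forall a b, ex_RInt g a b) ->
  (forall s, Rabs s <= Rabs t -> Rabs (g s) <= c * Rabs s ^ n / INR (fact n)) ->
  Rabs (RInt g 0 t) <= c * Rabs t ^ (S n) / INR (fact (S n)).
Proof.
  intros Hex Hb.
  destruct (Rle_dec 0 t) as [Ht|Ht].
  - rewrite (Rabs_pos_eq t Ht). rewrite <- RInt_powpos by auto.
    apply Rabs_le. split.
    + replace (- RInt (fun s => c * s ^ n / INR (fact n)) 0 t) with
        (RInt (fun s => - (c * s ^ n / INR (fact n))) 0 t).
      2:{ rewrite (RInt_opp (V:=R_CompleteNormedModule)). reflexivity. apply poly_ex_RInt. }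
      apply RInt_le; auto.
      * apply (ex_RInt_opp (V:=R_CompleteNormedModule)). apply poly_ex_RInt.
      * intros x Hx. assert (Rabs x <= Rabs t) by (rewrite !Rabs_pos_eq; lra).
        specialize (Hb x H). rewrite (Rabs_pos_eq x) in Hb by lra.
        apply Rabs_le_between in Hb. lra.
    + apply RInt_le; auto. apply poly_ex_RInt.
      intros x Hx. assert (Rabs x <= Rabs t) by (rewrite !Rabs_pos_eq; lra).
      specialize (Hb x H). rewrite (Rabs_pos_eq x) in Hb by lra.
      apply Rabs_le_between in Hb. lra.
  - rewrite (Rabs_left t) by lra. rewrite <- RInt_powneg by lra.
    rewrite <- (opp_RInt_swap g t 0) by auto.
    change (Rabs (- RInt g t 0) <= RInt (fun s : R => c * (- s) ^ n / INR (fact n)) t 0).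
    rewrite Rabs_Ropp.
    apply Rabs_le. split.
    + replace (- RInt (fun s => c * (- s) ^ n / INR (fact n)) t 0) with
        (RInt (fun s => - (c * (- s) ^ n / INR (fact n))) t 0).
      2:{ rewrite (RInt_opp (V:=R_CompleteNormedModule)). reflexivity. apply polyneg_ex_RInt. }
      apply RInt_le; auto. lra.
      * apply (ex_RInt_opp (V:=R_CompleteNormedModule)). apply polyneg_ex_RInt.
      * intros x Hx. assert (Rabs x <= Rabs t) by (rewrite !Rabs_left; lra).
        specialize (Hb x H). rewrite (Rabs_left x) in Hb by lra.
        apply Rabs_le_between in Hb. lra.
    + apply RInt_le; auto. lra. apply polyneg_ex_RInt.
      intros x Hx. assert (Rabs x <= Rabs t) by (rewrite !Rabs_left; lra).
      specialize (Hb x H). rewrite (Rabs_left x) in Hb by lra.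
      apply Rabs_le_between in Hb. lra.
Qed.

Lemma RInt_bound_ab (g : R -> R) K a b :
  (forall a b, ex_RInt g a b) ->
  (forall s, Rabs (g s) <= K) ->
  Rabs (RInt g a b) <= K * Rabs (b - a).
Proof.
  intros Hex Hb.
  destruct (Rle_dec a b) as [Ht|Ht].
  - rewrite (Rabs_pos_eq (b - a)) by lra.
    rewrite Rmult_comm. apply abs_RInt_le_const; auto.
  - rewrite (Rabs_left (b - a)) by lra.
    rewrite <- (opp_RInt_swap g b a) by auto.
    change (Rabs (- RInt g b a) <= K * - (b - a)).
    rewrite Rabs_Ropp.
    replace (K * - (b - a)) with ((a - b) * K) by ring.
    apply abs_RInt_le_const; auto; lra.
Qed.

Lemma RInt_diff_0 (g : R -> R) t t' :
  (forall a b, ex_RInt g a b) ->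
  RInt g 0 t - RInt g 0 t' = RInt g t' t.
Proof.
  intros Hex.
  rewrite <- (RInt_Chasles (V:=R_CompleteNormedModule) g t' 0 t) by auto.
  rewrite <- (opp_RInt_swap g 0 t') by auto.
  unfold plus, opp. simpl. ring.
Qed.

Lemma RInt_minus_R (g h : R -> R) a b :
  ex_RInt g a b -> ex_RInt h a b ->
  RInt g a b - RInt h a b = RInt (fun s => g s - h s) a b.
Proof.
  intros H1 H2.
  pose proof (RInt_minus (V:=R_CompleteNormedModule) g h a b H1 H2) as E.
  unfold minus, plus, opp in E. simpl in E. unfold Rminus. rewrite E. reflexivity.
Qed.

Lemma small_eq0 x : (forall d, 0 < d -> Rabs x <= d) -> x = 0.
Proof.
  intros H. destruct (Req_dec x 0); auto.
  specialize (H (Rabs x / 2)). assert (0 < Rabs x) by (apply Rabs_pos_lt; auto).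
  lra.
Qed.

Lemma int_close (g h : R -> R) t e :
  (forall a b, ex_RInt g a b) -> (forall a b, ex_RInt h a b) ->
  (forall s, Rabs s <= Rabs t -> Rabs (g s - h s) <= e) ->
  Rabs (RInt g 0 t - RInt h 0 t) <= e * Rabs t.
Proof.
  intros Hg Hh Hb. rewrite RInt_minus_R by auto.
  apply RInt_bound0; auto. intros. apply (ex_RInt_minus (V:=R_CompleteNormedModule)); auto.
Qed.

Section Picard.
Variables (f1 f2 : R -> R -> R) (a b M L : R).
Hypothesis HM1 : forall x y, Rabs (f1 x y) <= M.
Hypothesis HM2 : forall x y, Rabs (f2 x y) <= M.
Hypothesis HL1 : forall x y x' y', Rabs (f1 x y - f1 x' y') <= L * (Rabs (x - x') + Rabs (y - y')).
Hypothesis HL2 : forall x y x' y', Rabs (f2 x y - f2 x' y') <= L * (Rabs (x - x') + Rabs (y - y')).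
Hypothesis HLpos : 0 < L.

Lemma M_nonneg : 0 <= M.
Proof. pose proof (HM1 0 0). pose proof (Rabs_pos (f1 0 0)). lra. Qed.

Fixpoint pic (n : nat) : (R -> R) * (R -> R) :=
  match n with
  | O => (fun _ => a, fun _ => b)
  | S n' => let pq := pic n' in
     (fun t => a + RInt (fun s => f1 (fst pq s) (snd pq s)) 0 t,
      fun t => b + RInt (fun s => f2 (fst pq s) (snd pq s)) 0 t)
  end.

Definition Mlip (p : R -> R) := forall t t', Rabs (p t - p t') <= M * Rabs (t - t').

Lemma comp_lip (f : R -> R -> R) p q :
  (forall x y x' y', Rabs (f x y - f x' y') <= L * (Rabs (x - x') + Rabs (y - y'))) ->
  Mlip p -> Mlip q ->
  forall x y, Rabs (f (p x) (q x) - f (p y) (q y)) <= (2 * L * M) * Rabs (x - y).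
Proof.
  intros Hf Hp Hq x y.
  eapply Rle_trans. apply Hf.
  specialize (Hp x y). specialize (Hq x y).
  nra.
Qed.

Lemma pic_lip n : Mlip (fst (pic n)) /\ Mlip (snd (pic n)).
Proof.
  pose proof M_nonneg.
  induction n as [|n [IH1 IH2]].
  - split; intros t t'; simpl; rewrite Rminus_diag, Rabs_R0;
      apply Rmult_le_pos; auto; apply Rabs_pos.
  - split; intros t t'; simpl.
    + replace (a + RInt (fun s => f1 (fst (pic n) s) (snd (pic n) s)) 0 t -
        (a + RInt (fun s => f1 (fst (pic n) s) (snd (pic n) s)) 0 t')) with
        (RInt (fun s => f1 (fst (pic n) s) (snd (pic n) s)) 0 t -
         RInt (fun s => f1 (fst (pic n) s) (snd (pic n) s)) 0 t') by ring.
      assert (Hex : forall a b, ex_RInt (fun s => f1 (fst (pic n) s) (snd (pic n) s)) a b).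
      { intros; eapply lip_ex_RInt. apply comp_lip; eauto. }
      rewrite RInt_diff_0 by auto.
      apply RInt_bound_ab; auto.
    + replace (b + RInt (fun s => f2 (fst (pic n) s) (snd (pic n) s)) 0 t -
        (b + RInt (fun s => f2 (fst (pic n) s) (snd (pic n) s)) 0 t')) with
        (RInt (fun s => f2 (fst (pic n) s) (snd (pic n) s)) 0 t -
         RInt (fun s => f2 (fst (pic n) s) (snd (pic n) s)) 0 t') by ring.
      assert (Hex : forall a b, ex_RInt (fun s => f2 (fst (pic n) s) (snd (pic n) s)) a b).
      { intros; eapply lip_ex_RInt. apply comp_lip; eauto. }
      rewrite RInt_diff_0 by auto.
      apply RInt_bound_ab; auto.
Qed.

Lemma pic_ex1 n a' b' : ex_RInt (fun s => f1 (fst (pic n) s) (snd (pic n) s)) a' b'.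
Proof. destruct (pic_lip n). eapply lip_ex_RInt. apply comp_lip; eauto. Qed.
Lemma pic_ex2 n a' b' : ex_RInt (fun s => f2 (fst (pic n) s) (snd (pic n) s)) a' b'.
Proof. destruct (pic_lip n). eapply lip_ex_RInt. apply comp_lip; eauto. Qed.

Lemma pic_diff n t :
  Rabs (fst (pic (S n)) t - fst (pic n) t) + Rabs (snd (pic (S n)) t - snd (pic n) t)
  <= 2 * M * (2 * L) ^ n * Rabs t ^ (S n) / INR (fact (S n)).
Proof.
  revert t. induction n as [|n IH]; intros t.
  - change (Rabs (a + RInt (fun _ => f1 a b) 0 t - a) + Rabs (b + RInt (fun _ => f2 a b) 0 t - b) <= 2 * M * (2 * L) ^ 0 * Rabs t ^ 1 / INR (fact 1)).
    assert (E : forall x y : R, x + y - x = y) by (intros; ring). rewrite !E.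
    replace (2 * M * (2 * L) ^ 0 * Rabs t ^ 1 / INR (fact 1)) with (2 * M * Rabs t) by (simpl; field).
    pose proof (RInt_bound0 (fun _ => f1 a b) M t) as H1.
    pose proof (RInt_bound0 (fun _ => f2 a b) M t) as H2.
    assert (Rabs (RInt (fun _ => f1 a b) 0 t) <= M * Rabs t).
    { apply H1. intros. apply (pic_ex1 0). intros; auto. }
    assert (Rabs (RInt (fun _ => f2 a b) 0 t) <= M * Rabs t).
    { apply H2. intros. apply (pic_ex2 0). intros; auto. }
    lra.
  - set (c := L * (2 * M * (2 * L) ^ n)).
    assert (K1 : Rabs (fst (pic (S (S n))) t - fst (pic (S n)) t) <= c * Rabs t ^ (S (S n)) / INR (fact (S (S n)))).
    { change (Rabs ((a + RInt (fun s => f1 (fst (pic (S n)) s) (snd (pic (S n)) s)) 0 t) -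
               (a + RInt (fun s => f1 (fst (pic n) s) (snd (pic n) s)) 0 t))
              <= c * Rabs t ^ (S (S n)) / INR (fact (S (S n)))).
      replace ((a + RInt (fun s => f1 (fst (pic (S n)) s) (snd (pic (S n)) s)) 0 t) -
               (a + RInt (fun s => f1 (fst (pic n) s) (snd (pic n) s)) 0 t)) with
        (RInt (fun s => f1 (fst (pic (S n)) s) (snd (pic (S n)) s)) 0 t -
         RInt (fun s => f1 (fst (pic n) s) (snd (pic n) s)) 0 t) by ring.
      rewrite RInt_minus_R by (apply pic_ex1).
      apply RInt_pow_bound.
      + intros. apply (ex_RInt_minus (V:=R_CompleteNormedModule)); apply pic_ex1.
      + intros s _. eapply Rle_trans. apply HL1.
        unfold c. rewrite Rmult_assoc. unfold Rdiv. rewrite Rmult_assoc.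
        apply Rmult_le_compat_l. lra. specialize (IH s). unfold Rdiv in IH. lra. }
    assert (K2 : Rabs (snd (pic (S (S n))) t - snd (pic (S n)) t) <= c * Rabs t ^ (S (S n)) / INR (fact (S (S n)))).
    { change (Rabs ((b + RInt (fun s => f2 (fst (pic (S n)) s) (snd (pic (S n)) s)) 0 t) -
               (b + RInt (fun s => f2 (fst (pic n) s) (snd (pic n) s)) 0 t))
              <= c * Rabs t ^ (S (S n)) / INR (fact (S (S n)))).
      replace ((b + RInt (fun s => f2 (fst (pic (S n)) s) (snd (pic (S n)) s)) 0 t) -
               (b + RInt (fun s => f2 (fst (pic n) s) (snd (pic n) s)) 0 t)) with
        (RInt (fun s => f2 (fst (pic (S n)) s) (snd (pic (S n)) s)) 0 t -
         RInt (fun s => f2 (fst (pic n) s) (snd (pic n) s)) 0 t) by ring.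
      rewrite RInt_minus_R by (apply pic_ex2).
      apply RInt_pow_bound.
      + intros. apply (ex_RInt_minus (V:=R_CompleteNormedModule)); apply pic_ex2.
      + intros s _. eapply Rle_trans. apply HL2.
        unfold c. rewrite Rmult_assoc. unfold Rdiv. rewrite Rmult_assoc.
        apply Rmult_le_compat_l. lra. specialize (IH s). unfold Rdiv in IH. lra. }
    replace (2 * M * (2 * L) ^ S n * Rabs t ^ S (S n) / INR (fact (S (S n))))
      with (c * Rabs t ^ (S (S n)) / INR (fact (S (S n))) + c * Rabs t ^ (S (S n)) / INR (fact (S (S n)))).
    lra. unfold c. rewrite <- (tech_pow_Rmult (2*L) n). field. apply INR_fact_neq_0.
Qed.


Definition ex_t (T : R) (j : nat) : R := / INR (fact j) * (2 * L * T) ^ j.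
Definition S_t (T : R) (m : nat) : R := sum_f_R0 (ex_t T) m.

Lemma pic_sum T s : Rabs s <= T -> forall n k,
  Rabs (fst (pic (n + k)) s - fst (pic n) s) + Rabs (snd (pic (n + k)) s - snd (pic n) s)
  <= M / L * (S_t T (n + k) - S_t T n).
Proof.
  intros Hs n k. pose proof M_nonneg.
  assert (HT : 0 <= T) by (pose proof (Rabs_pos s); lra).
  induction k as [|k IH].
  - rewrite Nat.add_0_r, !Rminus_diag, Rabs_R0. lra.
  - rewrite Nat.add_succ_r.
    pose proof (pic_diff (n + k) s) as D.
    assert (E : S_t T (S (n + k)) = S_t T (n + k) + ex_t T (S (n + k))) by reflexivity.
    rewrite E.
    assert (B : 2 * M * (2 * L) ^ (n + k) * Rabs s ^ S (n + k) / INR (fact (S (n + k)))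
             <= M / L * ex_t T (S (n + k))).
    { unfold ex_t. rewrite (Rpow_mult_distr (2 * L) T).
      assert (Rabs s ^ S (n + k) <= T ^ S (n + k)) by (apply pow_incr; split; [apply Rabs_pos|auto]).
      pose proof (INR_fact_lt_0 (S (n + k))).
      rewrite <- (tech_pow_Rmult (2 * L) (n + k)).
      assert (0 <= (2 * L) ^ (n + k)) by (apply pow_le; lra).
      replace (M / L * (/ INR (fact (S (n + k))) * (2 * L * (2 * L) ^ (n + k) * T ^ S (n + k))))
        with (2 * M * (2 * L) ^ (n + k) * T ^ S (n + k) / INR (fact (S (n + k)))) by (field; lra).
      unfold Rdiv. apply Rmult_le_compat_r. left; apply Rinv_0_lt_compat; auto.
      apply Rmult_le_compat_l; auto. apply Rmult_le_pos; lra. }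
    pose proof (Rabs_triang (fst (pic (S (n + k))) s - fst (pic (n + k)) s) (fst (pic (n + k)) s - fst (pic n) s)).
    pose proof (Rabs_triang (snd (pic (S (n + k))) s - snd (pic (n + k)) s) (snd (pic (n + k)) s - snd (pic n) s)).
    replace (fst (pic (S (n + k))) s - fst (pic n) s) with
      ((fst (pic (S (n + k))) s - fst (pic (n + k)) s) + (fst (pic (n + k)) s - fst (pic n) s)) by ring.
    replace (snd (pic (S (n + k))) s - snd (pic n) s) with
      ((snd (pic (S (n + k))) s - snd (pic (n + k)) s) + (snd (pic (n + k)) s - snd (pic n) s)) by ring.
    assert (M / L * (S_t T (n + k) + ex_t T (S (n + k)) - S_t T n) =
            M / L * (S_t T (n + k) - S_t T n) + M / L * ex_t T (S (n + k))) by ring.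
    lra.
Qed.

Lemma pic_ucauchy T : 0 <= T -> forall eps, 0 < eps -> exists N, forall n m s,
  (N <= n)%nat -> (n <= m)%nat -> Rabs s <= T ->
  Rabs (fst (pic m) s - fst (pic n) s) + Rabs (snd (pic m) s - snd (pic n) s) <= eps.
Proof.
  intros HT eps Heps. pose proof M_nonneg.
  destruct (exist_exp (2 * L * T)) as [l Hl].
  set (e' := eps * L / (2 * (M + 1))).
  assert (He' : 0 < e') by (unfold e'; apply Rdiv_lt_0_compat; nra).
  destruct (Hl e' He') as [N HN].
  exists N. intros n m s Hn Hm Hs.
  replace m with (n + (m - n))%nat by lia.
  eapply Rle_trans. apply (pic_sum T s Hs).
  assert (A1 : Rdist (sum_f_R0 (fun i => / INR (fact i) * (2 * L * T) ^ i) n) l < e') by (apply HN; lia).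
  assert (A2 : Rdist (sum_f_R0 (fun i => / INR (fact i) * (2 * L * T) ^ i) (n + (m - n))) l < e') by (apply HN; lia).
  unfold Rdist in *. unfold S_t, ex_t.
  set (x := sum_f_R0 (fun i => / INR (fact i) * (2 * L * T) ^ i) (n + (m - n))) in *.
  set (y := sum_f_R0 (fun i => / INR (fact i) * (2 * L * T) ^ i) n) in *.
  apply Rabs_def2 in A1. apply Rabs_def2 in A2.
  assert (x - y <= 2 * e') by lra.
  assert (0 <= M / L) by (apply Rmult_le_pos; [lra| left; apply Rinv_0_lt_compat; lra]).
  apply Rle_trans with (M / L * (2 * e')).
  apply Rmult_le_compat_l; auto.
  unfold e'. replace (M / L * (2 * (eps * L / (2 * (M + 1))))) with (eps * (M / (M + 1))) by (field; lra).
  assert (M / (M + 1) <= 1).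
  { apply (Rmult_le_reg_r (M + 1)). lra. unfold Rdiv. rewrite Rmult_assoc, Rinv_l by lra. lra. }
  nra.
Qed.

Definition Psol (s : R) : R := real (Lim_seq (fun n => fst (pic n) s)).
Definition Qsol (s : R) : R := real (Lim_seq (fun n => snd (pic n) s)).

Lemma Psol_lim s : Un_cv (fun n => fst (pic n) s) (Psol s).
Proof.
  apply is_lim_seq_Reals. unfold Psol. apply Lim_seq_correct'.
  apply ex_lim_seq_cauchy_corr. intros [e He].
  destruct (pic_ucauchy (Rabs s) (Rabs_pos s) (e / 2)) as [N HN]. lra.
  exists N. intros n m Hn Hm. simpl.
  destruct (le_lt_dec n m).
  - pose proof (HN n m s Hn l (Rle_refl _)). rewrite Rabs_minus_sym.
    pose proof (Rabs_pos (snd (pic m) s - snd (pic n) s)). lra.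
  - assert (m <= n)%nat by lia.
    pose proof (HN m n s Hm H (Rle_refl _)).
    pose proof (Rabs_pos (snd (pic n) s - snd (pic m) s)). lra.
Qed.

Lemma Qsol_lim s : Un_cv (fun n => snd (pic n) s) (Qsol s).
Proof.
  apply is_lim_seq_Reals. unfold Qsol. apply Lim_seq_correct'.
  apply ex_lim_seq_cauchy_corr. intros [e He].
  destruct (pic_ucauchy (Rabs s) (Rabs_pos s) (e / 2)) as [N HN]. lra.
  exists N. intros n m Hn Hm. simpl.
  destruct (le_lt_dec n m).
  - pose proof (HN n m s Hn l (Rle_refl _)). rewrite Rabs_minus_sym.
    pose proof (Rabs_pos (fst (pic m) s - fst (pic n) s)). lra.
  - assert (m <= n)%nat by lia.
    pose proof (HN m n s Hm H (Rle_refl _)).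
    pose proof (Rabs_pos (fst (pic n) s - fst (pic m) s)). lra.
Qed.

Lemma sol_approx T : 0 <= T -> forall eps, 0 < eps -> exists N, forall n s,
  (N <= n)%nat -> Rabs s <= T ->
  Rabs (Psol s - fst (pic n) s) + Rabs (Qsol s - snd (pic n) s) <= eps.
Proof.
  intros HT eps Heps.
  destruct (pic_ucauchy T HT eps Heps) as [N HN].
  exists N. intros n s Hn Hs.
  apply le_epsilon. intros d Hd.
  destruct (Psol_lim s (d / 2)) as [m1 Hm1]. lra.
  destruct (Qsol_lim s (d / 2)) as [m2 Hm2]. lra.
  set (m := max n (max m1 m2)).
  specialize (Hm1 m ltac:(lia)). specialize (Hm2 m ltac:(lia)).
  specialize (HN n m s Hn ltac:(lia) Hs).
  unfold R_dist in *.
  pose proof (Rabs_triang (Psol s - fst (pic m) s) (fst (pic m) s - fst (pic n) s)).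
  pose proof (Rabs_triang (Qsol s - snd (pic m) s) (snd (pic m) s - snd (pic n) s)).
  replace (Psol s - fst (pic n) s) with ((Psol s - fst (pic m) s) + (fst (pic m) s - fst (pic n) s)) by ring.
  replace (Qsol s - snd (pic n) s) with ((Qsol s - snd (pic m) s) + (snd (pic m) s - snd (pic n) s)) by ring.
  rewrite Rabs_minus_sym in Hm1, Hm2.
  lra.
Qed.

Lemma sol_lip : Mlip Psol /\ Mlip Qsol.
Proof.
  split; intros t t'; apply le_epsilon; intros d Hd;
  destruct (sol_approx (Rmax (Rabs t) (Rabs t')) (Rle_trans _ _ _ (Rabs_pos t) (Rmax_l _ _)) (d / 2)) as [N HN]; try lra;
  pose proof (HN N t (le_n _) (Rmax_l _ _)) as H1;
  pose proof (HN N t' (le_n _) (Rmax_r _ _)) as H2;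
  destruct (pic_lip N) as [L1 L2].
  - specialize (L1 t t').
    pose proof (Rabs_pos (Qsol t - snd (pic N) t)). pose proof (Rabs_pos (Qsol t' - snd (pic N) t')).
    pose proof (Rabs_triang (Psol t - fst (pic N) t) (fst (pic N) t - Psol t')).
    pose proof (Rabs_triang (fst (pic N) t - fst (pic N) t') (fst (pic N) t' - Psol t')).
    replace (Psol t - Psol t') with ((Psol t - fst (pic N) t) + ((fst (pic N) t - fst (pic N) t') + (fst (pic N) t' - Psol t'))) by ring.
    pose proof (Rabs_triang (Psol t - fst (pic N) t) ((fst (pic N) t - fst (pic N) t') + (fst (pic N) t' - Psol t'))).
    rewrite (Rabs_minus_sym (fst (pic N) t')) in *. lra.
  - specialize (L2 t t').
    pose proof (Rabs_pos (Psol t - fst (pic N) t)). pose proof (Rabs_pos (Psol t' - fst (pic N) t')).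
    pose proof (Rabs_triang (snd (pic N) t - snd (pic N) t') (snd (pic N) t' - Qsol t')).
    replace (Qsol t - Qsol t') with ((Qsol t - snd (pic N) t) + ((snd (pic N) t - snd (pic N) t') + (snd (pic N) t' - Qsol t'))) by ring.
    pose proof (Rabs_triang (Qsol t - snd (pic N) t) ((snd (pic N) t - snd (pic N) t') + (snd (pic N) t' - Qsol t'))).
    rewrite (Rabs_minus_sym (snd (pic N) t')) in *. lra.
Qed.

Lemma sol_ex1 a' b' : ex_RInt (fun s => f1 (Psol s) (Qsol s)) a' b'.
Proof. destruct sol_lip. eapply lip_ex_RInt. apply comp_lip; eauto. Qed.
Lemma sol_ex2 a' b' : ex_RInt (fun s => f2 (Psol s) (Qsol s)) a' b'.
Proof. destruct sol_lip. eapply lip_ex_RInt. apply comp_lip; eauto. Qed.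


Lemma sol_int t :
  Psol t = a + RInt (fun s => f1 (Psol s) (Qsol s)) 0 t /\
  Qsol t = b + RInt (fun s => f2 (Psol s) (Qsol s)) 0 t.
Proof.
  assert (Hpos : 0 < 1 + L * Rabs t) by (pose proof (Rabs_pos t); nra).
  split; apply Rminus_diag_uniq; apply small_eq0; intros d Hd;
  destruct (sol_approx (Rabs t) (Rabs_pos t) (d / (1 + L * Rabs t))) as [N HN];
  try (apply Rdiv_lt_0_compat; lra).
  - pose proof (HN (S N) t ltac:(lia) (Rle_refl _)) as H1.
    assert (H2 : Rabs (RInt (fun s => f1 (fst (pic N) s) (snd (pic N) s)) 0 t - RInt (fun s => f1 (Psol s) (Qsol s)) 0 t)
                 <= (L * (d / (1 + L * Rabs t))) * Rabs t).
    { apply int_close. apply pic_ex1. apply sol_ex1.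
      intros s Hs. eapply Rle_trans. apply HL1. apply Rmult_le_compat_l. lra.
      specialize (HN N s (le_n _) Hs). rewrite (Rabs_minus_sym (fst (pic N) s)), (Rabs_minus_sym (snd (pic N) s)). lra. }
    change (fst (pic (S N)) t) with (a + RInt (fun s => f1 (fst (pic N) s) (snd (pic N) s)) 0 t) in H1.
    revert H1 H2.
    generalize (Rabs_pos (Qsol t - snd (pic (S N)) t)).
    generalize (RInt (fun s => f1 (fst (pic N) s) (snd (pic N) s)) 0 t).
    generalize (RInt (fun s => f1 (Psol s) (Qsol s)) 0 t).
    intros I2 I1 Hp H1 H2.
    replace (Psol t - (a + I2)) with ((Psol t - (a + I1)) + (I1 - I2)) by ring.
    eapply Rle_trans. apply Rabs_triang.
    replace d with (d / (1 + L * Rabs t) + L * (d / (1 + L * Rabs t)) * Rabs t) by (field; lra).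
    lra.
  - pose proof (HN (S N) t ltac:(lia) (Rle_refl _)) as H1.
    assert (H2 : Rabs (RInt (fun s => f2 (fst (pic N) s) (snd (pic N) s)) 0 t - RInt (fun s => f2 (Psol s) (Qsol s)) 0 t)
                 <= (L * (d / (1 + L * Rabs t))) * Rabs t).
    { apply int_close. apply pic_ex2. apply sol_ex2.
      intros s Hs. eapply Rle_trans. apply HL2. apply Rmult_le_compat_l. lra.
      specialize (HN N s (le_n _) Hs). rewrite (Rabs_minus_sym (fst (pic N) s)), (Rabs_minus_sym (snd (pic N) s)). lra. }
    change (snd (pic (S N)) t) with (b + RInt (fun s => f2 (fst (pic N) s) (snd (pic N) s)) 0 t) in H1.
    revert H1 H2.
    generalize (Rabs_pos (Psol t - fst (pic (S N)) t)).
    generalize (RInt (fun s => f2 (fst (pic N) s) (snd (pic N) s)) 0 t).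
    generalize (RInt (fun s => f2 (Psol s) (Qsol s)) 0 t).
    intros I2 I1 Hp H1 H2.
    replace (Qsol t - (b + I2)) with ((Qsol t - (b + I1)) + (I1 - I2)) by ring.
    eapply Rle_trans. apply Rabs_triang.
    replace d with (d / (1 + L * Rabs t) + L * (d / (1 + L * Rabs t)) * Rabs t) by (field; lra).
    lra.
Qed.


Lemma deriv_int (g : R -> R) c t :
  (forall a b, ex_RInt g a b) -> continuous g t ->
  derivable_pt_lim (fun t => c + RInt g 0 t) t (g t).
Proof.
  intros Hex Hc.
  replace (g t) with (0 + g t) by ring.
  apply (derivable_pt_lim_plus (fun _ => c) (fun t => RInt g 0 t)).
  apply derivable_pt_lim_const.
  apply is_derive_Reals.
  apply (is_derive_RInt g (fun t => RInt g 0 t) 0 t); auto.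
  apply filter_forall. intros. apply (RInt_correct (V:=R_CompleteNormedModule)). auto.
Qed.

Lemma sol_deriv t :
  derivable_pt_lim Psol t (f1 (Psol t) (Qsol t)) /\
  derivable_pt_lim Qsol t (f2 (Psol t) (Qsol t)).
Proof.
  destruct sol_lip as [LP LQ].
  split.
  - apply is_derive_Reals.
    apply (is_derive_ext (fun t => a + RInt (fun s => f1 (Psol s) (Qsol s)) 0 t)).
    intros; symmetry; apply sol_int.
    apply is_derive_Reals. apply (deriv_int (fun s => f1 (Psol s) (Qsol s))).
    apply sol_ex1. eapply lip_cont. apply comp_lip; eauto.
  - apply is_derive_Reals.
    apply (is_derive_ext (fun t => b + RInt (fun s => f2 (Psol s) (Qsol s)) 0 t)).
    intros; symmetry; apply sol_int.
    apply is_derive_Reals. apply (deriv_int (fun s => f2 (Psol s) (Qsol s))).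
    apply sol_ex2. eapply lip_cont. apply comp_lip; eauto.
Qed.

Lemma sol_init : Psol 0 = a /\ Qsol 0 = b.
Proof.
  destruct (sol_int 0) as [E1 E2]. rewrite E1, E2.
  rewrite !(RInt_point (V:=R_CompleteNormedModule)). unfold zero; simpl. split; ring.
Qed.

End Picard.
Theorem picard_global (f1 f2 : R -> R -> R) (a b M L : R) :
  (forall x y, Rabs (f1 x y) <= M) ->
  (forall x y, Rabs (f2 x y) <= M) ->
  (forall x y x' y', Rabs (f1 x y - f1 x' y') <= L * (Rabs (x - x') + Rabs (y - y'))) ->
  (forall x y x' y', Rabs (f2 x y - f2 x' y') <= L * (Rabs (x - x') + Rabs (y - y'))) ->
  0 < L ->
  exists P Q : R -> R, P 0 = a /\ Q 0 = b /\
    forall t, derivable_pt_lim P t (f1 (P t) (Q t)) /\ derivable_pt_lim Q t (f2 (P t) (Q t)).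
Proof.
  intros H1 H2 H3 H4 H5.
  exists (Psol f1 f2 a b), (Qsol f1 f2 a b).
  destruct (sol_init f1 f2 a b M L H1 H2 H3 H4 H5).
  split; auto. split; auto.
  intros t. apply (sol_deriv f1 f2 a b M L); auto.
Qed.

Section Beta.
Variables Tm Tp bm bp : R.
Hypothesis hT : 0 < Tm < Tp.
Hypothesis hb : 0 < bm < bp.

Definition kb := (bp - bm) / (Tp - Tm).

Lemma kb_pos : 0 < kb.
Proof. unfold kb. apply Rdiv_lt_0_compat; lra. Qed.

Lemma coalbedo_mid T : Tm < T < Tp -> coalbedo Tm Tp bm bp T = bm + kb * (T - Tm).
Proof.
  intros H. unfold coalbedo, kb.
  destruct (Rle_dec T Tm); [lra|]. destruct (Rle_dec Tp T); [lra|].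
  field. lra.
Qed.

Lemma coalbedo_bounds T : bm <= coalbedo Tm Tp bm bp T <= bp.
Proof.
  unfold coalbedo.
  destruct (Rle_dec T Tm); [lra|]. destruct (Rle_dec Tp T); [lra|].
  assert (0 <= (T - Tm) / (Tp - Tm) <= 1).
  { split. unfold Rdiv. apply Rmult_le_pos. lra. left; apply Rinv_0_lt_compat; lra.
    apply (Rmult_le_reg_r (Tp - Tm)). lra. unfold Rdiv. rewrite Rmult_assoc, Rinv_l by lra. lra. }
  nra.
Qed.

Lemma coalbedo_lip x y : Rabs (coalbedo Tm Tp bm bp x - coalbedo Tm Tp bm bp y) <= kb * Rabs (x - y).
Proof.
  pose proof kb_pos as Hk.
  assert (Hkd : kb * (Tp - Tm) = bp - bm) by (unfold kb; field; lra).
  assert (Ex : (x <= Tm /\ coalbedo Tm Tp bm bp x = bm) \/ (Tp <= x /\ coalbedo Tm Tp bm bp x = bp)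
               \/ (Tm < x < Tp /\ coalbedo Tm Tp bm bp x = bm + kb * (x - Tm))).
  { unfold coalbedo at 1 2 3. destruct (Rle_dec x Tm). left; lra. destruct (Rle_dec Tp x). right; left; lra.
    right; right. split. lra. unfold kb. field. lra. }
  assert (Ey : (y <= Tm /\ coalbedo Tm Tp bm bp y = bm) \/ (Tp <= y /\ coalbedo Tm Tp bm bp y = bp)
               \/ (Tm < y < Tp /\ coalbedo Tm Tp bm bp y = bm + kb * (y - Tm))).
  { unfold coalbedo at 1 2 3. destruct (Rle_dec y Tm). left; lra. destruct (Rle_dec Tp y). right; left; lra.
    right; right. split. lra. unfold kb. field. lra. }
  destruct Ex as [[Hx ->]|[[Hx ->]|[Hx ->]]]; destruct Ey as [[Hy ->]|[[Hy ->]|[Hy ->]]];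
  apply Rabs_le; split; unfold Rabs; destruct (Rcase_abs (x - y)); nra.
Qed.

End Beta.

Lemma pow4_abs x : 0 <= x -> Rabs x ^ 3 * x = x ^ 4.
Proof. intros H. rewrite Rabs_pos_eq by auto. ring. Qed.

Lemma pow4_lip x y K : Rabs x <= K -> Rabs y <= K -> Rabs (x ^ 4 - y ^ 4) <= 4 * K ^ 3 * Rabs (x - y).
Proof.
  intros Hx Hy.
  replace (x ^ 4 - y ^ 4) with ((x - y) * (x ^ 3 + x ^ 2 * y + x * y ^ 2 + y ^ 3)) by ring.
  rewrite Rabs_mult, Rmult_comm. apply Rmult_le_compat_r. apply Rabs_pos.
  assert (HK : 0 <= K) by (pose proof (Rabs_pos x); lra).
  pose proof (Rabs_pos x). pose proof (Rabs_pos y).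
  assert (A1 : Rabs (x ^ 3) <= K ^ 3) by (rewrite <- RPow_abs; apply pow_incr; lra).
  assert (A2 : Rabs (x ^ 2 * y) <= K ^ 3).
  { rewrite Rabs_mult, <- RPow_abs. replace (K ^ 3) with (K ^ 2 * K) by ring.
    apply Rmult_le_compat; try apply pow_le; auto. apply pow_incr; lra. }
  assert (A3 : Rabs (x * y ^ 2) <= K ^ 3).
  { rewrite Rabs_mult, <- RPow_abs. replace (K ^ 3) with (K * K ^ 2) by ring.
    apply Rmult_le_compat; try apply pow_le; auto. apply pow_incr; lra. }
  assert (A4 : Rabs (y ^ 3) <= K ^ 3) by (rewrite <- RPow_abs; apply pow_incr; lra).
  pose proof (Rabs_triang (x ^ 3 + x ^ 2 * y + x * y ^ 2) (y ^ 3)).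
  pose proof (Rabs_triang (x ^ 3 + x ^ 2 * y) (x * y ^ 2)).
  pose proof (Rabs_triang (x ^ 3) (x ^ 2 * y)).
  lra.
Qed.

Definition cl (lo hi x : R) : R := Rmax lo (Rmin hi x).

Lemma cl_bounds lo hi x : lo <= hi -> lo <= cl lo hi x <= hi.
Proof.
  intros H. unfold cl. split. apply Rmax_l.
  apply Rmax_lub; auto. apply Rmin_l.
Qed.

Lemma cl_id lo hi x : lo <= x <= hi -> cl lo hi x = x.
Proof.
  intros H. unfold cl. rewrite Rmin_right by lra. rewrite Rmax_right by lra. auto.
Qed.

Lemma cl_lip lo hi x y : lo <= hi -> Rabs (cl lo hi x - cl lo hi y) <= Rabs (x - y).
Proof.
  intros H. unfold cl, Rmax, Rmin.
  repeat (destruct (Rle_dec _ _)); apply Rabs_le; split; unfold Rabs; destruct (Rcase_abs (x - y)); lra.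
Qed.

Lemma ctn_ed f t : continuity_pt f t ->
  forall e, 0 < e -> exists d, 0 < d /\ forall s, Rabs (s - t) < d -> Rabs (f s - f t) < e.
Proof.
  intros H e He. destruct (H e He) as [d [Hd Hs]].
  exists d. split; auto. intros s Hst.
  destruct (Req_dec s t). subst. rewrite Rminus_diag, Rabs_R0; auto.
  apply (Hs s). split. split. exact I. auto. exact Hst.
Qed.

Lemma deriv_cont f t l : derivable_pt_lim f t l -> continuity_pt f t.
Proof.
  intros H. apply derivable_continuous_pt. exists l. exact H.
Qed.

Lemma deriv_cont_all f : (forall t, exists l, derivable_pt_lim f t l) -> continuity f.
Proof.
  intros H t. destruct (H t) as [l Hl]. eapply deriv_cont; eauto.
Qed.

Lemma cont2 (H : R -> R -> R) (Lf : R -> R) (u v : R -> R) t :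
  (forall K, 0 <= Lf K) ->
  (forall K x y x' y', Rabs x <= K -> Rabs y <= K -> Rabs x' <= K -> Rabs y' <= K ->
     Rabs (H x y - H x' y') <= Lf K * (Rabs (x - x') + Rabs (y - y'))) ->
  continuity_pt u t -> continuity_pt v t ->
  forall e, 0 < e -> exists d, 0 < d /\ forall s, Rabs (s - t) < d ->
    Rabs (H (u s) (v s) - H (u t) (v t)) < e.
Proof.
  intros HLp HL Cu Cv e He.
  set (K := Rabs (u t) + Rabs (v t) + 1).
  set (r := Rmin 1 (e / (2 * (Lf K + 1)))).
  assert (Hr : 0 < r).
  { unfold r. apply Rmin_pos. lra. apply Rdiv_lt_0_compat. lra. specialize (HLp K). lra. }
  destruct (ctn_ed u t Cu r Hr) as [d1 [Hd1 H1]].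
  destruct (ctn_ed v t Cv r Hr) as [d2 [Hd2 H2]].
  exists (Rmin d1 d2). split. apply Rmin_pos; auto.
  intros s Hs.
  assert (A1 : Rabs (u s - u t) < r) by (apply H1; pose proof (Rmin_l d1 d2); lra).
  assert (A2 : Rabs (v s - v t) < r) by (apply H2; pose proof (Rmin_r d1 d2); lra).
  assert (r <= 1) by apply Rmin_l.
  assert (Hr2 : r <= e / (2 * (Lf K + 1))) by apply Rmin_r.
  pose proof (Rabs_pos (u t)). pose proof (Rabs_pos (v t)).
  assert (B1 : Rabs (u s) <= K).
  { unfold K. pose proof (Rabs_triang (u s - u t) (u t)) as T. replace (u s - u t + u t) with (u s) in T by ring. lra. }
  assert (B2 : Rabs (v s) <= K).
  { unfold K. pose proof (Rabs_triang (v s - v t) (v t)) as T. replace (v s - v t + v t) with (v s) in T by ring. lra. }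
  assert (B3 : Rabs (u t) <= K) by (unfold K; lra).
  assert (B4 : Rabs (v t) <= K) by (unfold K; lra).
  eapply Rle_lt_trans. apply HL; eauto.
  specialize (HLp K).
  assert (Lf K * (Rabs (u s - u t) + Rabs (v s - v t)) <= Lf K * (2 * r)).
  { apply Rmult_le_compat_l; lra. }
  assert (Lf K * (2 * r) <= Lf K * (2 * (e / (2 * (Lf K + 1))))).
  { apply Rmult_le_compat_l; lra. }
  assert (Lf K * (2 * (e / (2 * (Lf K + 1)))) < e).
  { replace (Lf K * (2 * (e / (2 * (Lf K + 1))))) with (e * (Lf K / (Lf K + 1))) by (field; lra).
    assert (Lf K / (Lf K + 1) < 1).
    { apply (Rmult_lt_reg_r (Lf K + 1)). lra. unfold Rdiv. rewrite Rmult_assoc, Rinv_l by lra. lra. }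
    nra. }
  lra.
Qed.

Lemma mvt_lower f f' a b c : a <= b ->
  (forall x, a <= x <= b -> derivable_pt_lim f x (f' x)) ->
  (forall x, a <= x <= b -> c <= f' x) -> c * (b - a) <= f b - f a.
Proof.
  intros Hab Hd Hc. destruct (Req_dec a b). subst. rewrite !Rminus_diag. lra.
  destruct (MVT_cor2 f f' a b ltac:(lra) Hd) as [x [E Hx]].
  rewrite E. apply Rmult_le_compat_r. lra. apply Hc. lra.
Qed.

Lemma mvt_upper f f' a b c : a <= b ->
  (forall x, a <= x <= b -> derivable_pt_lim f x (f' x)) ->
  (forall x, a <= x <= b -> f' x <= c) -> f b - f a <= c * (b - a).
Proof.
  intros Hab Hd Hc. destruct (Req_dec a b). subst. rewrite !Rminus_diag. lra.
  destruct (MVT_cor2 f f' a b ltac:(lra) Hd) as [x [E Hx]].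
  rewrite E. apply Rmult_le_compat_r. lra. apply Hc. lra.
Qed.

Lemma deriv_pos_right f t l : derivable_pt_lim f t l -> 0 < l ->
  exists d, 0 < d /\ forall s, t < s < t + d -> f t < f s.
Proof.
  intros H Hl. destruct (H (l / 2) ltac:(lra)) as [[d Hd] Hh].
  exists d. split; auto. intros s Hs.
  specialize (Hh (s - t) ltac:(lra)). simpl in Hh.
  assert (Rabs (s - t) < d) by (rewrite Rabs_pos_eq; lra).
  specialize (Hh H0). replace (t + (s - t)) with s in Hh by ring.
  apply Rabs_def2 in Hh. destruct Hh as [_ Hh].
  assert (0 < (f s - f t) / (s - t)) by lra.
  assert (0 < s - t) by lra.
  unfold Rdiv in H1. 
  assert (0 < f s - f t).
  { apply (Rmult_lt_reg_r (/ (s - t))). apply Rinv_0_lt_compat; lra. lra. }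
  lra.
Qed.

Lemma closed_ge (f : R -> R) t1 sg c :
  continuity_pt f sg -> t1 <= sg -> (forall s, t1 <= s < sg -> c <= f s) -> f t1 >= c -> c <= f sg.
Proof.
  intros Hc H1 Hs Ht1.
  destruct (Req_dec t1 sg). subst. lra.
  destruct (Rle_dec c (f sg)); auto. exfalso.
  destruct (ctn_ed f sg Hc (c - f sg) ltac:(lra)) as [d [Hd Hf]].
  set (s := Rmax t1 (sg - d / 2)).
  assert (t1 <= s < sg). { unfold s. split. apply Rmax_l. apply Rmax_lub_lt; lra. }
  assert (Rabs (s - sg) < d).
  { rewrite Rabs_left by lra. unfold s. pose proof (Rmax_r t1 (sg - d/2)). lra. }
  specialize (Hf s H2). specialize (Hs s H0). apply Rabs_def2 in Hf. lra.
Qed.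

Lemma closed_le (f : R -> R) t1 sg c :
  continuity_pt f sg -> t1 <= sg -> (forall s, t1 <= s < sg -> f s <= c) -> f t1 <= c -> f sg <= c.
Proof.
  intros Hc H1 Hs Ht1.
  assert (- c <= - f sg).
  { apply (closed_ge (fun x => - f x) t1 sg (- c)).
    - apply (continuity_pt_opp f sg Hc).
    - auto.
    - intros s Hs'. specialize (Hs s Hs'). lra.
    - lra. }
  lra.
Qed.

Lemma Rabs_le_between x e : Rabs x <= e -> - e <= x <= e.
Proof. unfold Rabs; destruct (Rcase_abs x); intros; lra. Qed.

Definition ctn (f : R -> R) t := forall e, 0 < e -> exists d, 0 < d /\ forall s, Rabs (s - t) < d -> Rabs (f s - f t) < e.

Lemma closed_ge' (f : R -> R) t1 sg c :
  ctn f sg -> t1 <= sg -> (forall s, t1 <= s < sg -> c <= f s) -> c <= f t1 -> c <= f sg.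
Proof.
  intros Hc H1 Hs Ht1.
  destruct (Req_dec t1 sg). subst. lra.
  destruct (Rle_dec c (f sg)); auto. exfalso.
  destruct (Hc (c - f sg) ltac:(lra)) as [d [Hd Hf]].
  set (s := Rmax t1 (sg - d / 2)).
  assert (t1 <= s < sg). { unfold s. split. apply Rmax_l. apply Rmax_lub_lt; lra. }
  assert (Rabs (s - sg) < d).
  { rewrite Rabs_left by lra. unfold s. pose proof (Rmax_r t1 (sg - d/2)). lra. }
  specialize (Hf s H2). specialize (Hs s H0). apply Rabs_def2 in Hf. lra.
Qed.

Lemma closed_le' (f : R -> R) t1 sg c :
  ctn f sg -> t1 <= sg -> (forall s, t1 <= s < sg -> f s <= c) -> f t1 <= c -> f sg <= c.
Proof.
  intros Hc H1 Hs Ht1.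
  assert (- c <= - f sg).
  { apply (closed_ge' (fun x => - f x) t1 sg (- c)).
    - intros e He. destruct (Hc e He) as [d [Hd Hf]]. exists d. split; auto.
      intros s Hs'. specialize (Hf s Hs'). rewrite <- Rabs_Ropp. replace (- (- f s - - f sg)) with (f s - f sg) by ring. auto.
    - auto.
    - intros s Hs'. specialize (Hs s Hs'). lra.
    - lra. }
  lra.
Qed.

Lemma dpow f t l n : derivable_pt_lim f t l ->
  derivable_pt_lim (fun s => f s ^ n) t (INR n * f t ^ (pred n) * l).
Proof.
  intros H. apply (derivable_pt_lim_comp f (fun y => y ^ n) t l (INR n * f t ^ pred n)); auto.
  apply derivable_pt_lim_pow.
Qed.

Section Dyn.
Variables (eps sB q Tm Tp bm bp ga gs umax vmax U1 : R) (u v : R -> R).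
Hypothesis hga : 0 < ga.
Hypothesis hgs : 0 < gs.
Hypothesis hsB : 0 < sB.
Hypothesis hq : 0 < q.
Hypothesis heps : 0 < eps < 2.
Hypothesis hT : 0 < Tm < Tp.
Hypothesis hb : 0 < bm < bp.
Hypothesis hvmax : 0 < vmax.
Hypothesis hU1 : 0 <= U1 /\ vmax ^ 4 <= eps * U1 ^ 4.
Hypothesis humax : U1 + (2 * sB * vmax ^ 4 * (gs * vmax / (q * bm)) + 2 * gs * vmax) / ga < umax.
Hypothesis Hcu : continuity u.
Hypothesis Hcv : continuity v.

Definition Gf x y := eps * sB * x ^ 4 + q * coalbedo Tm Tp bm bp y - sB * y ^ 4.
Definition Pf (x y : R) := 2 * x ^ 4 - y ^ 4.
Definition inbox t := 0 <= u t <= umax /\ 0 <= v t <= vmax.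
Definition good t := 0 < u t < umax /\ 0 < v t < vmax /\ 0 < Gf (u t) (v t) /\ 0 < Pf (u t) (v t).

Hypothesis Hdu : forall t, inbox t -> derivable_pt_lim u t (eps * sB * Pf (u t) (v t) / ga).
Hypothesis Hdv : forall t, inbox t -> derivable_pt_lim v t (- Gf (u t) (v t) / gs).

Definition Kh := q * kb Tm Tp bm bp + 4 * sB * vmax ^ 3.

Lemma Kh_pos : 0 < Kh.
Proof.
  unfold Kh. pose proof (kb_pos Tm Tp bm bp hT hb).
  assert (0 < vmax ^ 3) by (apply pow_lt; lra). nra.
Qed.

Lemma ctn_u t : ctn u t.
Proof. intros e He. apply (ctn_ed u t (Hcu t) e He). Qed.
Lemma ctn_v t : ctn v t.
Proof. intros e He. apply (ctn_ed v t (Hcv t) e He). Qed.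

Lemma ctn_G t : ctn (fun s => Gf (u s) (v s)) t.
Proof.
  intros e He.
  apply (cont2 Gf (fun K => 4 * Rabs K ^ 3 * (eps * sB + sB) + q * kb Tm Tp bm bp)); auto.
  - intros K. pose proof (kb_pos Tm Tp bm bp hT hb).
    assert (0 <= Rabs K ^ 3) by (apply pow_le; apply Rabs_pos).
    assert (0 <= eps * sB) by (apply Rmult_le_pos; lra).
    apply Rplus_le_le_0_compat; apply Rmult_le_pos; lra.
  - intros K x y x' y' Hx Hy Hx' Hy'. unfold Gf.
    assert (HK : K <= Rabs K) by apply Rle_abs.
    pose proof (pow4_lip x x' (Rabs K) ltac:(lra) ltac:(lra)) as A.
    pose proof (pow4_lip y y' (Rabs K) ltac:(lra) ltac:(lra)) as B.
    pose proof (coalbedo_lip Tm Tp bm bp hT hb y y') as C.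
    replace (eps * sB * x ^ 4 + q * coalbedo Tm Tp bm bp y - sB * y ^ 4 -
      (eps * sB * x' ^ 4 + q * coalbedo Tm Tp bm bp y' - sB * y' ^ 4)) with
      (eps * sB * (x ^ 4 - x' ^ 4) + q * (coalbedo Tm Tp bm bp y - coalbedo Tm Tp bm bp y') - sB * (y ^ 4 - y' ^ 4)) by ring.
    eapply Rle_trans. apply Rabs_triang. rewrite Rabs_Ropp.
    eapply Rle_trans. apply Rplus_le_compat_r. apply Rabs_triang.
    rewrite !Rabs_mult. rewrite (Rabs_pos_eq eps), (Rabs_pos_eq sB), (Rabs_pos_eq q) by lra.
    pose proof (Rabs_pos (x - x')). pose proof (Rabs_pos (y - y')).
    assert (0 <= Rabs K ^ 3) by (apply pow_le; apply Rabs_pos).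
    assert (eps * sB * Rabs (x ^ 4 - x' ^ 4) <= eps * sB * (4 * Rabs K ^ 3 * Rabs (x - x'))) by (apply Rmult_le_compat_l; [apply Rmult_le_pos; lra | lra]).
    assert (q * Rabs (coalbedo Tm Tp bm bp y - coalbedo Tm Tp bm bp y') <= q * (kb Tm Tp bm bp * Rabs (y - y'))) by (apply Rmult_le_compat_l; lra).
    assert (sB * Rabs (y ^ 4 - y' ^ 4) <= sB * (4 * Rabs K ^ 3 * Rabs (y - y'))) by (apply Rmult_le_compat_l; lra).
    pose proof (kb_pos Tm Tp bm bp hT hb).
    assert (0 <= Rabs K ^ 3 * eps * sB * Rabs (y - y')) by (repeat apply Rmult_le_pos; try apply Rabs_pos; lra).
    assert (0 <= Rabs K ^ 3 * sB * Rabs (x - x')) by (repeat apply Rmult_le_pos; try apply Rabs_pos; lra).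
    assert (0 <= q * kb Tm Tp bm bp * Rabs (x - x')) by (apply Rmult_le_pos; [apply Rmult_le_pos; lra | apply Rabs_pos]).
    lra.
Qed.

Lemma ctn_P t : ctn (fun s => Pf (u s) (v s)) t.
Proof.
  intros e He.
  apply (cont2 Pf (fun K => 8 * Rabs K ^ 3)); auto.
  - intros K. assert (0 <= Rabs K ^ 3) by (apply pow_le; apply Rabs_pos). nra.
  - intros K x y x' y' Hx Hy Hx' Hy'. unfold Pf.
    assert (HK : K <= Rabs K) by apply Rle_abs.
    pose proof (pow4_lip x x' (Rabs K) ltac:(lra) ltac:(lra)) as A.
    pose proof (pow4_lip y y' (Rabs K) ltac:(lra) ltac:(lra)) as B.
    replace (2 * x ^ 4 - y ^ 4 - (2 * x' ^ 4 - y' ^ 4)) with (2 * (x ^ 4 - x' ^ 4) - (y ^ 4 - y' ^ 4)) by ring.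
    eapply Rle_trans. apply Rabs_triang. rewrite Rabs_Ropp, Rabs_mult, (Rabs_pos_eq 2) by lra.
    pose proof (Rabs_pos (x - x')). pose proof (Rabs_pos (y - y')).
    assert (0 <= Rabs K ^ 3) by (apply pow_le; apply Rabs_pos).
    nra.
Qed.

Lemma G_incr al be c eta ulow :
  al < be -> (forall s, al <= s <= be -> inbox s) ->
  (forall s, al <= s <= be -> c <= eps * sB * Pf (u s) (v s) / ga) ->
  (forall s, al <= s <= be -> Rabs (Gf (u s) (v s)) <= eta) ->
  0 <= ulow <= u al -> 0 <= c ->
  (be - al) * (eps * sB * ulow ^ 3 * c - Kh * eta / gs) <= Gf (u be) (v be) - Gf (u al) (v al).
Proof.
  intros Hab Hin Hc Heta Hul Hc0.
  assert (H1 : c * (be - al) <= u be - u al).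
  { apply (mvt_lower u (fun s => eps * sB * Pf (u s) (v s) / ga)). lra.
    intros; apply Hdu; apply Hin; auto. exact Hc. }
  assert (H2 : v be - v al <= (eta / gs) * (be - al)).
  { apply (mvt_upper v (fun s => - Gf (u s) (v s) / gs)). lra.
    intros; apply Hdv; apply Hin; auto.
    intros x Hx. specialize (Heta x Hx). apply Rabs_le_between in Heta.
    unfold Rdiv. apply Rmult_le_compat_r. left; apply Rinv_0_lt_compat; lra. lra. }
  assert (H3 : - (eta / gs) * (be - al) <= v be - v al).
  { apply (mvt_lower v (fun s => - Gf (u s) (v s) / gs)). lra.
    intros; apply Hdv; apply Hin; auto.
    intros x Hx. specialize (Heta x Hx). apply Rabs_le_between in Heta.
    unfold Rdiv. rewrite Ropp_mult_distr_l. apply Rmult_le_compat_r. left; apply Rinv_0_lt_compat; lra. lra. }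
  assert (Hdv' : Rabs (v be - v al) <= (eta / gs) * (be - al)).
  { apply Rabs_le. lra. }
  destruct (Hin al ltac:(lra)) as [[Ua1 Ua2] [Va1 Va2]].
  destruct (Hin be ltac:(lra)) as [[Ub1 Ub2] [Vb1 Vb2]].
  assert (Hd : 0 <= u be - u al) by nra.
  assert (A : ulow ^ 3 * (u be - u al) <= u be ^ 4 - u al ^ 4).
  { assert (ulow ^ 3 <= u al ^ 3) by (apply pow_incr; lra).
    assert (0 <= (u be - u al) * (u be ^ 3 + u be ^ 2 * u al + u be * u al ^ 2)).
    { apply Rmult_le_pos; auto.
      assert (0 <= u be ^ 3) by (apply pow_le; lra).
      assert (0 <= u be ^ 2 * u al) by (apply Rmult_le_pos; [apply pow_le|]; lra).
      assert (0 <= u be * u al ^ 2) by (apply Rmult_le_pos; [|apply pow_le]; lra).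
      lra. }
    assert (ulow ^ 3 * (u be - u al) <= u al ^ 3 * (u be - u al)) by (apply Rmult_le_compat_r; lra).
    replace (u be ^ 4 - u al ^ 4) with ((u be - u al) * (u be ^ 3 + u be ^ 2 * u al + u be * u al ^ 2) + u al ^ 3 * (u be - u al)) by ring.
    lra. }
  assert (B : Rabs (coalbedo Tm Tp bm bp (v be) - coalbedo Tm Tp bm bp (v al)) <= kb Tm Tp bm bp * Rabs (v be - v al))
    by (apply coalbedo_lip; auto).
  assert (C : Rabs (v be ^ 4 - v al ^ 4) <= 4 * vmax ^ 3 * Rabs (v be - v al)).
  { apply pow4_lip; rewrite Rabs_pos_eq; lra. }
  assert (HB : - (q * (kb Tm Tp bm bp * Rabs (v be - v al))) <= q * (coalbedo Tm Tp bm bp (v be) - coalbedo Tm Tp bm bp (v al))).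
  { apply Rabs_le_between in B. assert (0 < q) by lra.
    assert (q * (- (kb Tm Tp bm bp * Rabs (v be - v al))) <= q * (coalbedo Tm Tp bm bp (v be) - coalbedo Tm Tp bm bp (v al))) by (apply Rmult_le_compat_l; lra).
    lra. }
  assert (HC : sB * (v be ^ 4 - v al ^ 4) <= sB * (4 * vmax ^ 3 * Rabs (v be - v al))).
  { apply Rmult_le_compat_l. lra. apply Rabs_le_between in C. lra. }
  assert (HA : eps * sB * (ulow ^ 3 * c * (be - al)) <= eps * sB * (u be ^ 4 - u al ^ 4)).
  { apply Rmult_le_compat_l. apply Rmult_le_pos; lra.
    eapply Rle_trans; [|exact A]. rewrite Rmult_assoc. apply Rmult_le_compat_l. apply pow_le; lra. lra. }
  assert (HD : Kh * Rabs (v be - v al) <= Kh * ((eta / gs) * (be - al))).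
  { apply Rmult_le_compat_l. left; apply Kh_pos. auto. }
  unfold Gf.
  replace (eps * sB * u be ^ 4 + q * coalbedo Tm Tp bm bp (v be) - sB * v be ^ 4 -
    (eps * sB * u al ^ 4 + q * coalbedo Tm Tp bm bp (v al) - sB * v al ^ 4)) with
    (eps * sB * (u be ^ 4 - u al ^ 4) + q * (coalbedo Tm Tp bm bp (v be) - coalbedo Tm Tp bm bp (v al)) - sB * (v be ^ 4 - v al ^ 4)) by ring.
  unfold Kh in HD.
  replace ((be - al) * (eps * sB * ulow ^ 3 * c - Kh * eta / gs)) with
    (eps * sB * (ulow ^ 3 * c * (be - al)) - Kh * ((eta / gs) * (be - al))) by (field; lra).
  unfold Kh. lra.
Qed.

Lemma U1_lt_umax : U1 < umax.
Proof.
  assert (0 <= (2 * sB * vmax ^ 4 * (gs * vmax / (q * bm)) + 2 * gs * vmax) / ga).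
  { apply Rmult_le_pos; [|left; apply Rinv_0_lt_compat; lra].
    assert (0 <= vmax ^ 4) by (apply pow_le; lra).
    assert (0 <= gs * vmax / (q * bm)).
    { apply Rmult_le_pos. nra. left; apply Rinv_0_lt_compat; nra. }
    assert (0 <= 2 * sB * vmax ^ 4) by nra.
    nra. }
  lra.
Qed.

Lemma good_open t : good t -> exists d, 0 < d /\ forall s, Rabs (s - t) < d -> good s.
Proof.
  intros [[U1' U2] [[V1 V2] [G1 P1]]].
  destruct (ctn_u t (Rmin (u t) (umax - u t)) ltac:(apply Rmin_pos; lra)) as [d1 [Hd1 H1]].
  destruct (ctn_v t (Rmin (v t) (vmax - v t)) ltac:(apply Rmin_pos; lra)) as [d2 [Hd2 H2]].
  destruct (ctn_G t (Gf (u t) (v t)) G1) as [d3 [Hd3 H3]].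
  destruct (ctn_P t (Pf (u t) (v t)) P1) as [d4 [Hd4 H4]].
  exists (Rmin (Rmin d1 d2) (Rmin d3 d4)). split.
  { apply Rmin_pos; apply Rmin_pos; auto. }
  intros s Hs.
  pose proof (Rmin_l (Rmin d1 d2) (Rmin d3 d4)). pose proof (Rmin_r (Rmin d1 d2) (Rmin d3 d4)).
  pose proof (Rmin_l d1 d2). pose proof (Rmin_r d1 d2). pose proof (Rmin_l d3 d4). pose proof (Rmin_r d3 d4).
  specialize (H1 s ltac:(lra)). specialize (H2 s ltac:(lra)). specialize (H3 s ltac:(lra)). specialize (H4 s ltac:(lra)).
  pose proof (Rmin_l (u t) (umax - u t)). pose proof (Rmin_r (u t) (umax - u t)).
  pose proof (Rmin_l (v t) (vmax - v t)). pose proof (Rmin_r (v t) (vmax - v t)).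
  apply Rabs_def2 in H1. apply Rabs_def2 in H2. apply Rabs_def2 in H3. apply Rabs_def2 in H4.
  unfold good. lra.
Qed.

Lemma good_inbox t : good t -> inbox t.
Proof. intros [[A B] [[C D] _]]. unfold inbox. lra. Qed.

Lemma reach t1 : 0 <= t1 -> good t1 -> u t1 < U1 ->
  exists sg, t1 <= sg /\ v sg = 0 /\ 0 < u sg /\ forall s, t1 <= s <= sg -> inbox s.
Proof.
  intros Ht1 Hg1 HuU1.
  pose proof Hg1 as [[u1pos u1max] [[v1pos v1max] [G1 P1]]].
  set (u1 := u t1) in *. set (v1 := v t1) in *.
  set (p1 := Pf u1 v1) in *.
  set (c1 := eps * sB * p1 / ga).
  assert (Hc1 : 0 < c1) by (unfold c1; apply Rdiv_lt_0_compat; [apply Rmult_lt_0_compat; [apply Rmult_lt_0_compat|]|]; lra).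
  set (E := fun t => t1 <= t /\ forall s, t1 <= s <= t -> good s).
  assert (factsE : forall t, E t -> forall s, t1 <= s <= t -> u1 <= u s /\ v s <= v1 /\ p1 <= Pf (u s) (v s)).
  { intros t [Ht Hgood] s Hs.
    assert (Hv : v s - v1 <= 0 * (s - t1)).
    { apply (mvt_upper v (fun x => - Gf (u x) (v x) / gs)). lra.
      intros x Hx. apply Hdv. apply good_inbox. apply Hgood. lra.
      intros x Hx. destruct (Hgood x ltac:(lra)) as [_ [_ [Gx _]]].
      unfold Rdiv. assert (0 < / gs) by (apply Rinv_0_lt_compat; lra). nra. }
    assert (Hu : 0 * (s - t1) <= u s - u1).
    { apply (mvt_lower u (fun x => eps * sB * Pf (u x) (v x) / ga)). lra.
      intros x Hx. apply Hdu. apply good_inbox. apply Hgood. lra.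
      intros x Hx. destruct (Hgood x ltac:(lra)) as [_ [_ [_ Px]]].
      apply Rlt_le. apply Rdiv_lt_0_compat; [apply Rmult_lt_0_compat; [apply Rmult_lt_0_compat|]|]; lra. }
    destruct (Hgood s Hs) as [[us1 us2] [[vs1 vs2] _]].
    split. lra. split. lra.
    unfold p1, Pf.
    assert (u1 ^ 4 <= u s ^ 4) by (apply pow_incr; lra).
    assert (v s ^ 4 <= v1 ^ 4) by (apply pow_incr; lra).
    lra. }
  assert (Hbound : forall t, E t -> t <= t1 + umax / c1).
  { intros t Ht. pose proof Ht as [Htt Hgood].
    assert (Hu : c1 * (t - t1) <= u t - u1).
    { apply (mvt_lower u (fun x => eps * sB * Pf (u x) (v x) / ga)). lra.
      intros x Hx. apply Hdu. apply good_inbox. apply Hgood. lra.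
      intros x Hx. destruct (factsE t Ht x Hx) as [_ [_ Px]].
      unfold c1, Rdiv. apply Rmult_le_compat_r. left; apply Rinv_0_lt_compat; lra.
      apply Rmult_le_compat_l. apply Rmult_le_pos; lra. auto. }
    destruct (Hgood t ltac:(lra)) as [[_ ut] _].
    assert (c1 * (t - t1) < umax) by lra.
    assert (t - t1 < umax / c1).
    { apply (Rmult_lt_reg_l c1). auto. unfold Rdiv. rewrite <- Rmult_assoc, (Rmult_comm c1 umax), Rmult_assoc, Rinv_r by lra. lra. }
    lra. }
  assert (HEt1 : E t1).
  { split. lra. intros s Hs. replace s with t1 by lra. auto. }
  destruct (completeness E) as [sg [Hub Hlub]].
  { exists (t1 + umax / c1). intros t Ht. apply Hbound; auto. }
  { exists t1. auto. }
  assert (Hsg1 : t1 <= sg) by (apply Hub; auto).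
  assert (Hbefore : forall s, t1 <= s < sg -> good s /\ u1 <= u s /\ v s <= v1 /\ p1 <= Pf (u s) (v s)).
  { intros s Hs.
    destruct (classic (exists t, E t /\ s <= t)) as [[t [Et Hst]]|Hno].
    - split. destruct Et as [_ Hg]. apply Hg. lra. apply (factsE t Et). lra.
    - exfalso. assert (is_upper_bound E s).
      { intros t Et. destruct (Rle_dec t s); auto. exfalso. apply Hno. exists t. split; auto. lra. }
      specialize (Hlub s H). lra. }
  assert (cu1 : u1 <= u sg).
  { apply (closed_ge' u t1 sg u1 (ctn_u sg) Hsg1). intros s Hs. apply Hbefore; auto. unfold u1; lra. }
  assert (cu2 : u sg <= umax).
  { apply (closed_le' u t1 sg umax (ctn_u sg) Hsg1). intros s Hs. destruct (Hbefore s Hs) as [[[_ A] _] _]. lra. fold u1; lra. }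
  assert (cv1 : v sg <= v1).
  { apply (closed_le' v t1 sg v1 (ctn_v sg) Hsg1). intros s Hs. apply Hbefore; auto. unfold v1; lra. }
  assert (cv2 : 0 <= v sg).
  { apply (closed_ge' v t1 sg 0 (ctn_v sg) Hsg1). intros s Hs. destruct (Hbefore s Hs) as [[_ [[A _] _]] _]. lra. fold v1; lra. }
  assert (cG : 0 <= Gf (u sg) (v sg)).
  { apply (closed_ge' (fun x => Gf (u x) (v x)) t1 sg 0 (ctn_G sg) Hsg1). intros s Hs. destruct (Hbefore s Hs) as [[_ [_ [A _]]] _]. lra. fold u1 v1; lra. }
  assert (cP : p1 <= Pf (u sg) (v sg)).
  { apply (closed_ge' (fun x => Pf (u x) (v x)) t1 sg p1 (ctn_P sg) Hsg1). intros s Hs. apply Hbefore; auto. fold u1 v1; unfold p1; lra. }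
  assert (Hall : forall s, t1 <= s <= sg -> inbox s /\ 0 <= Gf (u s) (v s) /\ p1 <= Pf (u s) (v s) /\ u1 <= u s).
  { intros s Hs. destruct (Req_dec s sg).
    - subst s. unfold inbox. repeat split; lra.
    - destruct (Hbefore s ltac:(lra)) as [Hg [A [B C]]]. split. apply good_inbox; auto.
      destruct Hg as [_ [_ [Gs _]]]. repeat split; lra. }
  assert (Hc1s : forall s, t1 <= s <= sg -> c1 <= eps * sB * Pf (u s) (v s) / ga).
  { intros s Hs. destruct (Hall s Hs) as [_ [_ [Ps _]]]. unfold c1, Rdiv. apply Rmult_le_compat_r.
    left; apply Rinv_0_lt_compat; lra. apply Rmult_le_compat_l. apply Rmult_le_pos; lra. auto. }
  destruct (Req_dec (v sg) 0) as [Hv0|Hv0].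
  { exists sg. split; auto. split; auto. split. lra. intros s Hs. apply Hall; auto. }
  exfalso.
  destruct (Req_dec (Gf (u sg) (v sg)) 0) as [HG0|HG0].
  -
    assert (Hlt : t1 < sg).
    { destruct (Req_dec t1 sg); [|lra]. subst sg. fold u1 v1 in HG0. lra. }
    set (eta := eps * sB * u1 ^ 3 * c1 * gs / (2 * Kh)).
    pose proof Kh_pos as HKh.
    assert (Hu13 : 0 < u1 ^ 3) by (apply pow_lt; lra).
    assert (Heta : 0 < eta).
    { unfold eta. apply Rdiv_lt_0_compat. apply Rmult_lt_0_compat; [apply Rmult_lt_0_compat; [apply Rmult_lt_0_compat; [apply Rmult_lt_0_compat|]|]|]; lra. lra. }
    destruct (ctn_G sg eta Heta) as [d [Hd Hdd]].
    set (s := Rmax t1 (sg - d / 2)).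
    assert (Hs : t1 <= s < sg). { unfold s. split. apply Rmax_l. apply Rmax_lub_lt; lra. }
    assert (Hs2 : sg - s <= d / 2). { unfold s. pose proof (Rmax_r t1 (sg - d / 2)). lra. }
    pose proof (G_incr s sg c1 eta u1 ltac:(lra)) as GI.
    assert (GI' : (sg - s) * (eps * sB * u1 ^ 3 * c1 - Kh * eta / gs) <= Gf (u sg) (v sg) - Gf (u s) (v s)).
    { apply GI.
      - intros x Hx. apply Hall. lra.
      - intros x Hx. apply Hc1s. lra.
      - intros x Hx. assert (Rabs (x - sg) < d) by (apply Rabs_def1; lra).
        specialize (Hdd x H). rewrite HG0, Rminus_0_r in Hdd. lra.
      - split. lra. apply (Hall s). lra.
      - lra. }
    assert (Kh * eta / gs = eps * sB * u1 ^ 3 * c1 / 2) by (unfold eta; field; lra).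
    rewrite H, HG0 in GI'.
    destruct (Hbefore s Hs) as [[_ [_ [Gs _]]] _].
    assert (0 < (sg - s) * (eps * sB * u1 ^ 3 * c1 - eps * sB * u1 ^ 3 * c1 / 2)).
    { apply Rmult_lt_0_compat. lra.
      assert (0 < eps * sB * u1 ^ 3 * c1) by (apply Rmult_lt_0_compat; [apply Rmult_lt_0_compat; [apply Rmult_lt_0_compat|]|]; lra). lra. }
    lra.
  - destruct (Req_dec (u sg) umax) as [Hum|Hum].
    +
      assert (Hlt : t1 < sg).
      { destruct (Req_dec t1 sg); [|lra]. subst sg. fold u1 in Hum. lra. }
      destruct (IVT (fun x => u x - U1) t1 sg) as [t2 [Ht2 Hut2]].
      { intros x. apply continuity_pt_minus. apply Hcu. apply continuity_pt_const. intros a b; auto. }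
      lra. simpl. fold u1. lra. simpl. pose proof U1_lt_umax. lra.
      simpl in Hut2.
      assert (HuU : forall s, t2 <= s <= sg -> U1 <= u s).
      { intros s Hs.
        assert (0 * (s - t2) <= u s - u t2).
        { apply (mvt_lower u (fun x => eps * sB * Pf (u x) (v x) / ga)). lra.
          intros x Hx. apply Hdu. apply Hall. lra.
          intros x Hx. pose proof (Hc1s x ltac:(lra)). lra. }
        lra. }
      assert (HGq : forall s, t2 <= s <= sg -> q * bm <= Gf (u s) (v s)).
      { intros s Hs. destruct (Hall s ltac:(lra)) as [[[us1 us2] [vs1 vs2]] _].
        pose proof (HuU s Hs).
        assert (U1 ^ 4 <= u s ^ 4) by (apply pow_incr; lra).
        assert (v s ^ 4 <= vmax ^ 4) by (apply pow_incr; lra).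
        assert (eps * U1 ^ 4 <= eps * u s ^ 4) by (apply Rmult_le_compat_l; lra).
        assert (sB * v s ^ 4 <= sB * (eps * u s ^ 4)) by (apply Rmult_le_compat_l; lra).
        pose proof (coalbedo_bounds Tm Tp bm bp hT hb (v s)).
        assert (q * bm <= q * coalbedo Tm Tp bm bp (v s)) by (apply Rmult_le_compat_l; lra).
        unfold Gf. lra. }
      assert (Hvdrop : v sg - v t2 <= (- (q * bm / gs)) * (sg - t2)).
      { apply (mvt_upper v (fun x => - Gf (u x) (v x) / gs)). lra.
        intros x Hx. apply Hdv. apply Hall. lra.
        intros x Hx. pose proof (HGq x Hx). unfold Rdiv.
        assert (0 < / gs) by (apply Rinv_0_lt_compat; lra).
        rewrite <- !Ropp_mult_distr_l. apply Ropp_le_contravar. apply Rmult_le_compat_r; lra. }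
      assert (Hw : ga * u sg + 2 * gs * v sg - (ga * u t2 + 2 * gs * v t2) <= (2 * sB * vmax ^ 4) * (sg - t2)).
      { apply (mvt_upper (fun x => ga * u x + 2 * gs * v x)
                 (fun x => ga * (eps * sB * Pf (u x) (v x) / ga) + 2 * gs * (- Gf (u x) (v x) / gs))). lra.
        - intros x Hx. destruct (Hall x ltac:(lra)) as [Hin _].
          apply (derivable_pt_lim_plus (fun x => ga * u x) (fun x => 2 * gs * v x)).
          apply (derivable_pt_lim_scal u ga). apply Hdu; auto.
          apply (derivable_pt_lim_scal v (2 * gs)). apply Hdv; auto.
        - intros x Hx. destruct (Hall x ltac:(lra)) as [[_ [vx1 vx2]] _].
          replace (ga * (eps * sB * Pf (u x) (v x) / ga) + 2 * gs * (- Gf (u x) (v x) / gs))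
            with ((2 - eps) * sB * v x ^ 4 - 2 * q * coalbedo Tm Tp bm bp (v x)) by (unfold Pf, Gf; field; lra).
          assert (v x ^ 4 <= vmax ^ 4) by (apply pow_incr; lra).
          assert (0 <= v x ^ 4) by (apply pow_le; lra).
          pose proof (coalbedo_bounds Tm Tp bm bp hT hb (v x)).
          assert (0 <= q * coalbedo Tm Tp bm bp (v x)) by (apply Rmult_le_pos; lra).
          assert ((2 - eps) * sB * v x ^ 4 <= 2 * sB * vmax ^ 4).
          { assert (0 <= sB * v x ^ 4) by (apply Rmult_le_pos; lra).
            assert (sB * v x ^ 4 <= sB * vmax ^ 4) by (apply Rmult_le_compat_l; lra).
            nra. }
          lra. }
      destruct (Hall t2 ltac:(lra)) as [[_ [vt1 vt2]] _].
      set (D2 := gs * vmax / (q * bm)).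
      assert (HD : sg - t2 <= D2).
      { assert (q * bm / gs * (sg - t2) <= vmax) by lra.
        unfold D2. apply (Rmult_le_reg_l (q * bm / gs)). apply Rdiv_lt_0_compat. apply Rmult_lt_0_compat; lra. lra.
        replace (q * bm / gs * (gs * vmax / (q * bm))) with vmax by (field; repeat split; apply Rgt_not_eq; lra).
        lra. }
      assert (0 <= 2 * sB * vmax ^ 4) by (assert (0 <= vmax ^ 4) by (apply pow_le; lra); nra).
      assert ((2 * sB * vmax ^ 4) * (sg - t2) <= (2 * sB * vmax ^ 4) * D2) by (apply Rmult_le_compat_l; lra).
      assert (ga * (umax - U1) <= 2 * sB * vmax ^ 4 * D2 + 2 * gs * vmax) by (assert (gs * (v t2 - v sg) <= gs * vmax) by (apply Rmult_le_compat_l; lra);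
             replace U1 with (u t2) by lra; rewrite <- Hum; lra).
      assert (U1 + (2 * sB * vmax ^ 4 * D2 + 2 * gs * vmax) / ga >= umax).
      { apply Rle_ge. apply (Rmult_le_reg_l ga). lra.
        replace (ga * (U1 + (2 * sB * vmax ^ 4 * D2 + 2 * gs * vmax) / ga)) with (ga * U1 + (2 * sB * vmax ^ 4 * D2 + 2 * gs * vmax)) by (field; lra).
        lra. }
      unfold D2 in H2. lra.
    +
      assert (Hgs : good sg).
      { unfold good. repeat split; try lra. }
      destruct (good_open sg Hgs) as [d [Hd Hdd]].
      assert (E (sg + d / 2)).
      { split. lra. intros s Hs. destruct (Rlt_le_dec s sg).
        - apply Hbefore. lra.
        - apply Hdd. apply Rabs_def1; lra. }
      specialize (Hub _ H). lra.
Qed.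

Lemma start a0 s0 : u 0 = a0 -> v 0 = s0 -> 0 < a0 -> 0 < s0 -> s0 + 1 <= vmax -> a0 + 1 <= U1 ->
  0 <= Gf a0 s0 -> 0 <= Pf a0 s0 -> ~ (Gf a0 s0 = 0 /\ Pf a0 s0 = 0) ->
  exists t1, 0 <= t1 /\ (forall s, 0 <= s <= t1 -> inbox s) /\ good t1 /\ u t1 < U1.
Proof.
  intros Hu0 Hv0 Ha0 Hs0 Hvm HU1a HG0 HP0 Hne.
  pose proof U1_lt_umax as HUm.
  set (r := Rmin (Rmin a0 s0) 1 / 2).
  assert (Hr : 0 < r) by (unfold r; apply Rdiv_lt_0_compat; [apply Rmin_pos; [apply Rmin_pos|]|]; lra).
  assert (Hr1 : r <= a0 / 2 /\ r <= s0 / 2 /\ r <= 1 / 2).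
  { unfold r. pose proof (Rmin_l (Rmin a0 s0) 1). pose proof (Rmin_r (Rmin a0 s0) 1).
    pose proof (Rmin_l a0 s0). pose proof (Rmin_r a0 s0). lra. }
  destruct (ctn_u 0 r Hr) as [du [Hdu0 Hnu]].
  destruct (ctn_v 0 r Hr) as [dv [Hdv0 Hnv]].
  set (d0 := Rmin du dv).
  assert (Hd0 : 0 < d0) by (apply Rmin_pos; auto).
  assert (Hnear : forall s, 0 <= s < d0 -> 0 < u s < U1 /\ 0 < v s < vmax).
  { intros s Hs. pose proof (Rmin_l du dv). pose proof (Rmin_r du dv). fold d0 in H, H0.
    assert (Rabs (s - 0) < du) by (rewrite Rminus_0_r, Rabs_pos_eq; lra).
    assert (Rabs (s - 0) < dv) by (rewrite Rminus_0_r, Rabs_pos_eq; lra).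
    specialize (Hnu s H1). specialize (Hnv s H2). rewrite Hu0 in Hnu. rewrite Hv0 in Hnv.
    apply Rabs_def2 in Hnu. apply Rabs_def2 in Hnv. lra. }
  assert (Hnb : forall s, 0 <= s < d0 -> inbox s).
  { intros s Hs. destruct (Hnear s Hs). unfold inbox. lra. }
  assert (Hfin : forall t1, 0 <= t1 < d0 -> 0 < Gf (u t1) (v t1) -> 0 < Pf (u t1) (v t1) ->
     exists t1, 0 <= t1 /\ (forall s, 0 <= s <= t1 -> inbox s) /\ good t1 /\ u t1 < U1).
  { intros t1 Ht1 G1 P1. exists t1. split. lra. split.
    intros s Hs. apply Hnb. lra.
    destruct (Hnear t1 Ht1). split. unfold good. repeat split; lra. lra. }
  destruct (Req_dec (Pf a0 s0) 0) as [HP|HP]; destruct (Req_dec (Gf a0 s0) 0) as [HG|HG].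
  - exfalso. apply Hne. auto.
  -
    assert (Hin0 : inbox 0) by (apply Hnb; lra).
    assert (Hd : derivable_pt_lim (fun s => Pf (u s) (v s)) 0
                   (2 * (INR 4 * u 0 ^ 3 * (eps * sB * Pf (u 0) (v 0) / ga)) - INR 4 * v 0 ^ 3 * (- Gf (u 0) (v 0) / gs))).
    { unfold Pf at 1.
      apply (derivable_pt_lim_minus (fun s => 2 * u s ^ 4) (fun s => v s ^ 4)).
      apply (derivable_pt_lim_scal (fun s => u s ^ 4) 2). apply dpow. apply Hdu; auto.
      apply dpow. apply Hdv; auto. }
    rewrite Hu0, Hv0, HP in Hd.
    destruct (deriv_pos_right _ _ _ Hd) as [d1 [Hd1 H1]].
    { replace (INR 4) with 4 by (simpl; ring).
      assert (0 < s0 ^ 3) by (apply pow_lt; lra).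
      assert (0 < Gf a0 s0 / gs) by (apply Rdiv_lt_0_compat; lra).
      unfold Rdiv at 1. rewrite Rmult_0_r, Rmult_0_l, Rmult_0_r. nra. }
    destruct (ctn_G 0 (Gf a0 s0) ltac:(lra)) as [d2 [Hd2 H2]].
    set (t1 := Rmin d0 (Rmin d1 d2) / 2).
    assert (Ht1 : 0 < t1 /\ t1 < d0 /\ t1 < d1 /\ t1 < d2).
    { unfold t1. pose proof (Rmin_l d0 (Rmin d1 d2)). pose proof (Rmin_r d0 (Rmin d1 d2)).
      pose proof (Rmin_l d1 d2). pose proof (Rmin_r d1 d2).
      assert (0 < Rmin d0 (Rmin d1 d2)) by (apply Rmin_pos; [|apply Rmin_pos]; auto). lra. }
    apply (Hfin t1). lra.
    + specialize (H2 t1 ltac:(rewrite Rminus_0_r, Rabs_pos_eq; lra)).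
      rewrite Hu0, Hv0 in H2. apply Rabs_def2 in H2. lra.
    + specialize (H1 t1 ltac:(lra)). rewrite Hu0, Hv0, HP in H1. lra.
  -
    assert (HP' : 0 < Pf a0 s0) by lra.
    destruct (ctn_P 0 (Pf a0 s0 / 2) ltac:(lra)) as [d3 [Hd3 H3]].
    set (c0 := eps * sB * (Pf a0 s0 / 2) / ga).
    assert (Hc0 : 0 < c0).
    { unfold c0. apply Rdiv_lt_0_compat; [apply Rmult_lt_0_compat; [apply Rmult_lt_0_compat|]|]; lra. }
    pose proof Kh_pos as HKh.
    assert (Ha3 : 0 < a0 ^ 3) by (apply pow_lt; lra).
    set (eta := eps * sB * a0 ^ 3 * c0 * gs / (2 * Kh)).
    assert (Heta : 0 < eta).
    { unfold eta. apply Rdiv_lt_0_compat. apply Rmult_lt_0_compat; [apply Rmult_lt_0_compat; [apply Rmult_lt_0_compat; [apply Rmult_lt_0_compat|]|]|]; lra. lra. }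
    destruct (ctn_G 0 eta Heta) as [d4 [Hd4 H4]].
    set (t1 := Rmin d0 (Rmin d3 d4) / 2).
    assert (Ht1 : 0 < t1 /\ t1 < d0 /\ t1 < d3 /\ t1 < d4).
    { unfold t1. pose proof (Rmin_l d0 (Rmin d3 d4)). pose proof (Rmin_r d0 (Rmin d3 d4)).
      pose proof (Rmin_l d3 d4). pose proof (Rmin_r d3 d4).
      assert (0 < Rmin d0 (Rmin d3 d4)) by (apply Rmin_pos; [|apply Rmin_pos]; auto). lra. }
    assert (HPn : forall s, 0 <= s <= t1 -> Pf a0 s0 / 2 < Pf (u s) (v s)).
    { intros s Hs. specialize (H3 s ltac:(rewrite Rminus_0_r, Rabs_pos_eq; lra)).
      rewrite Hu0, Hv0 in H3. apply Rabs_def2 in H3. lra. }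
    assert (GI : (t1 - 0) * (eps * sB * a0 ^ 3 * c0 - Kh * eta / gs) <= Gf (u t1) (v t1) - Gf (u 0) (v 0)).
    { apply G_incr. lra.
      - intros s Hs. apply Hnb. lra.
      - intros s Hs. unfold c0, Rdiv. apply Rmult_le_compat_r. left; apply Rinv_0_lt_compat; lra.
        apply Rmult_le_compat_l. apply Rmult_le_pos; lra. left. apply HPn. auto.
      - intros s Hs. specialize (H4 s ltac:(rewrite Rminus_0_r, Rabs_pos_eq; lra)).
        rewrite Hu0, Hv0, HG, Rminus_0_r in H4. lra.
      - rewrite Hu0. lra.
      - lra. }
    rewrite Hu0, Hv0, HG in GI.
    assert (Kh * eta / gs = eps * sB * a0 ^ 3 * c0 / 2) by (unfold eta; field; split; apply Rgt_not_eq; lra).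
    rewrite H in GI.
    assert (0 < eps * sB * a0 ^ 3 * c0) by (apply Rmult_lt_0_compat; [apply Rmult_lt_0_compat; [apply Rmult_lt_0_compat|]|]; lra).
    apply (Hfin t1). lra.
    + assert (0 < (t1 - 0) * (eps * sB * a0 ^ 3 * c0 - eps * sB * a0 ^ 3 * c0 / 2)) by (apply Rmult_lt_0_compat; lra).
      lra.
    + pose proof (HPn t1 ltac:(lra)). lra.
  - apply (Hfin 0). lra.
    + rewrite Hu0, Hv0. lra.
    + rewrite Hu0, Hv0. lra.
Qed.

Lemma dyn_main a0 s0 : u 0 = a0 -> v 0 = s0 -> 0 < a0 -> 0 < s0 -> s0 + 1 <= vmax -> a0 + 1 <= U1 ->
  0 <= Gf a0 s0 -> 0 <= Pf a0 s0 -> ~ (Gf a0 s0 = 0 /\ Pf a0 s0 = 0) ->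
  exists tau, 0 < tau /\ v tau = 0 /\ 0 < u tau /\ forall s, 0 <= s <= tau -> inbox s.
Proof.
  intros. destruct (start a0 s0) as [t1 [Ht1 [Hin [Hg Hu]]]]; auto.
  destruct (reach t1 Ht1 Hg Hu) as [sg [Hsg [Hv [Hpos Hin2]]]].
  exists sg. split.
  { destruct (Req_dec sg 0). subst sg. rewrite H0 in Hv. lra. lra. }
  split; auto. split; auto.
  intros s Hs. destruct (Rle_dec s t1). apply Hin; lra. apply Hin2; lra.
Qed.

End Dyn.

Section Field.
Variables (Tm Tp bm bp umax vmax : R).
Hypothesis hT : 0 < Tm < Tp.
Hypothesis hb : 0 < bm < bp.
Hypothesis hum : 0 <= umax.
Hypothesis hvm : 0 <= vmax.

Definition Hf (A B C x y : R) := A * (cl 0 umax x) ^ 4 + B * (cl 0 vmax y) ^ 4 + C * coalbedo Tm Tp bm bp (cl 0 vmax y).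

Let K := umax + vmax.

Lemma cl_K1 x : Rabs (cl 0 umax x) <= K.
Proof. pose proof (cl_bounds 0 umax x hum). unfold K. rewrite Rabs_pos_eq; lra. Qed.
Lemma cl_K2 x : Rabs (cl 0 vmax x) <= K.
Proof. pose proof (cl_bounds 0 vmax x hvm). unfold K. rewrite Rabs_pos_eq; lra. Qed.

Lemma Hf_bound A B C x y : Rabs (Hf A B C x y) <= (Rabs A + Rabs B) * K ^ 4 + Rabs C * bp.
Proof.
  unfold Hf.
  pose proof (cl_K1 x). pose proof (cl_K2 y).
  assert (E1 : Rabs (cl 0 umax x ^ 4) <= K ^ 4) by (rewrite <- RPow_abs; apply pow_incr; split; [apply Rabs_pos|auto]).
  assert (E2 : Rabs (cl 0 vmax y ^ 4) <= K ^ 4) by (rewrite <- RPow_abs; apply pow_incr; split; [apply Rabs_pos|auto]).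
  pose proof (coalbedo_bounds Tm Tp bm bp hT hb (cl 0 vmax y)).
  assert (E3 : Rabs (coalbedo Tm Tp bm bp (cl 0 vmax y)) <= bp) by (rewrite Rabs_pos_eq; lra).
  eapply Rle_trans. apply Rabs_triang. eapply Rle_trans. apply Rplus_le_compat_r. apply Rabs_triang.
  rewrite !Rabs_mult.
  pose proof (Rabs_pos A). pose proof (Rabs_pos B). pose proof (Rabs_pos C).
  assert (Rabs A * Rabs (cl 0 umax x ^ 4) <= Rabs A * K ^ 4) by (apply Rmult_le_compat_l; auto).
  assert (Rabs B * Rabs (cl 0 vmax y ^ 4) <= Rabs B * K ^ 4) by (apply Rmult_le_compat_l; auto).
  assert (Rabs C * Rabs (coalbedo Tm Tp bm bp (cl 0 vmax y)) <= Rabs C * bp) by (apply Rmult_le_compat_l; auto).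
  lra.
Qed.

Lemma Hf_lip A B C x y x' y' : Rabs (Hf A B C x y - Hf A B C x' y') <=
  (4 * K ^ 3 * (Rabs A + Rabs B) + Rabs C * kb Tm Tp bm bp) * (Rabs (x - x') + Rabs (y - y')).
Proof.
  unfold Hf.
  set (a := cl 0 umax x). set (a' := cl 0 umax x'). set (c := cl 0 vmax y). set (c' := cl 0 vmax y').
  assert (L1 : Rabs (a - a') <= Rabs (x - x')) by (apply cl_lip; auto).
  assert (L2 : Rabs (c - c') <= Rabs (y - y')) by (apply cl_lip; auto).
  assert (P1 : Rabs (a ^ 4 - a' ^ 4) <= 4 * K ^ 3 * Rabs (a - a')) by (apply pow4_lip; apply cl_K1).
  assert (P2 : Rabs (c ^ 4 - c' ^ 4) <= 4 * K ^ 3 * Rabs (c - c')) by (apply pow4_lip; apply cl_K2).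
  assert (P3 : Rabs (coalbedo Tm Tp bm bp c - coalbedo Tm Tp bm bp c') <= kb Tm Tp bm bp * Rabs (c - c'))
    by (apply coalbedo_lip; auto).
  replace (A * a ^ 4 + B * c ^ 4 + C * coalbedo Tm Tp bm bp c - (A * a' ^ 4 + B * c' ^ 4 + C * coalbedo Tm Tp bm bp c'))
    with (A * (a ^ 4 - a' ^ 4) + B * (c ^ 4 - c' ^ 4) + C * (coalbedo Tm Tp bm bp c - coalbedo Tm Tp bm bp c')) by ring.
  eapply Rle_trans. apply Rabs_triang. eapply Rle_trans. apply Rplus_le_compat_r. apply Rabs_triang.
  rewrite !Rabs_mult.
  pose proof (Rabs_pos A). pose proof (Rabs_pos B). pose proof (Rabs_pos C).
  pose proof (kb_pos Tm Tp bm bp hT hb).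
  assert (HK : 0 <= K ^ 3) by (apply pow_le; unfold K; lra).
  pose proof (Rabs_pos (x - x')). pose proof (Rabs_pos (y - y')).
  assert (Rabs A * Rabs (a ^ 4 - a' ^ 4) <= Rabs A * (4 * K ^ 3 * Rabs (x - x'))).
  { apply Rmult_le_compat_l; auto. eapply Rle_trans. apply P1. apply Rmult_le_compat_l; lra. }
  assert (Rabs B * Rabs (c ^ 4 - c' ^ 4) <= Rabs B * (4 * K ^ 3 * Rabs (y - y'))).
  { apply Rmult_le_compat_l; auto. eapply Rle_trans. apply P2. apply Rmult_le_compat_l; lra. }
  assert (Rabs C * Rabs (coalbedo Tm Tp bm bp c - coalbedo Tm Tp bm bp c') <= Rabs C * (kb Tm Tp bm bp * Rabs (y - y'))).
  { apply Rmult_le_compat_l; auto. eapply Rle_trans. apply P3. apply Rmult_le_compat_l; lra. }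
  assert (0 <= K ^ 3 * Rabs A * Rabs (y - y')) by (apply Rmult_le_pos; [apply Rmult_le_pos|]; lra).
  assert (0 <= K ^ 3 * Rabs B * Rabs (x - x')) by (apply Rmult_le_pos; [apply Rmult_le_pos|]; lra).
  assert (0 <= Rabs C * kb Tm Tp bm bp * Rabs (x - x')) by (apply Rmult_le_pos; [apply Rmult_le_pos|]; lra).
  lra.
Qed.

End Field.

Lemma c4_eq : Rpower 2 (1/4) ^ 4 = 2.
Proof.
  rewrite <- Rpower_pow by (unfold Rpower; apply exp_pos).
  rewrite Rpower_mult. replace (1 / 4 * INR 4) with 1 by (simpl; field).
  apply Rpower_1. lra.
Qed.

Lemma bdry_P eps sB q Tm Tp bm bp a0 s0 : 0 < a0 -> 0 < s0 ->
  in_boundary (inQ4 eps sB q Tm Tp bm bp) a0 s0 -> 0 <= Pf a0 s0.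
Proof.
  intros Ha Hs hC.
  set (c := Rpower 2 (1/4)).
  assert (Hc : 0 < c) by (unfold c, Rpower; apply exp_pos).
  assert (H1 : s0 <= c * a0).
  { destruct (Rle_dec s0 (c * a0)); auto. exfalso.
    set (e := Rmin 1 ((s0 - c * a0) / (2 * (1 + c)))).
    assert (He : 0 < e) by (unfold e; apply Rmin_pos; [lra|apply Rdiv_lt_0_compat; lra]).
    assert (He2 : e <= (s0 - c * a0) / (2 * (1 + c))) by apply Rmin_r.
    destruct (hC e He) as [[x [y [Hx [Hy Hq]]]] _].
    destruct Hq as [_ [Hyc _]]. fold c in Hyc.
    apply Rabs_def2 in Hx. apply Rabs_def2 in Hy.
    assert (c * (x - a0) < c * e) by (apply Rmult_lt_compat_l; lra).
    assert (e * (1 + c) <= (s0 - c * a0) / 2).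
    { apply (Rmult_le_compat_r (1 + c)) in He2; [|lra].
      replace ((s0 - c * a0) / (2 * (1 + c)) * (1 + c)) with ((s0 - c * a0) / 2) in He2 by (field; lra). lra. }
    nra. }
  unfold Pf.
  assert (s0 ^ 4 <= (c * a0) ^ 4) by (apply pow_incr; lra).
  rewrite Rpow_mult_distr in H. unfold c in H. rewrite c4_eq in H. lra.
Qed.

Lemma bdry_G eps sB q Tm Tp bm bp a0 s0 : 0 < Tm < Tp -> 0 < bm < bp -> 0 < a0 -> 0 < s0 ->
  in_boundary (inQ4 eps sB q Tm Tp bm bp) a0 s0 -> 0 <= Gf eps sB q Tm Tp bm bp a0 s0.
Proof.
  intros hT hb Ha Hs hC.
  set (um := a0 + 1). set (vm := s0 + 1).
  assert (HGH : forall x y, 0 <= x <= um -> 0 <= y <= vm ->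
     Gf eps sB q Tm Tp bm bp x y = Hf Tm Tp bm bp um vm (eps * sB) (- sB) q x y).
  { intros x y Hx Hy. unfold Gf, Hf. rewrite !cl_id by lra. ring. }
  set (Lg := 4 * (um + vm) ^ 3 * (Rabs (eps * sB) + Rabs (- sB)) + Rabs q * kb Tm Tp bm bp).
  assert (HLg : 0 <= Lg).
  { unfold Lg. pose proof (kb_pos Tm Tp bm bp hT hb).
    assert (0 <= (um + vm) ^ 3) by (apply pow_le; unfold um, vm; lra).
    pose proof (Rabs_pos (eps * sB)). pose proof (Rabs_pos (- sB)). pose proof (Rabs_pos q).
    apply Rplus_le_le_0_compat; apply Rmult_le_pos; try lra. }
  destruct (Rle_dec 0 (Gf eps sB q Tm Tp bm bp a0 s0)) as [|HG]; auto. exfalso.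
  set (G0 := Gf eps sB q Tm Tp bm bp a0 s0) in *.
  set (e := Rmin 1 (- G0 / (2 * (Lg + 1)))).
  assert (He : 0 < e) by (unfold e; apply Rmin_pos; [lra|apply Rdiv_lt_0_compat; lra]).
  assert (He1 : e <= 1) by apply Rmin_l.
  assert (He2 : e <= - G0 / (2 * (Lg + 1))) by apply Rmin_r.
  destruct (hC e He) as [[x [y [Hx [Hy Hq]]]] _].
  destruct Hq as [[Hx0 Hy0] [_ HGp]].
  pose proof Hx as Hx'. pose proof Hy as Hy'.
  apply Rabs_def2 in Hx. apply Rabs_def2 in Hy.
  assert (Gxy : 0 < Gf eps sB q Tm Tp bm bp x y) by (unfold Gf; lra).
  pose proof (Hf_lip Tm Tp bm bp um vm hT hb ltac:(unfold um; lra) ltac:(unfold vm; lra) (eps * sB) (- sB) q x y a0 s0) as HL.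
  rewrite <- !HGH in HL by (unfold um, vm; lra).
  fold Lg in HL. fold G0 in HL.
  assert (Lg * (Rabs (x - a0) + Rabs (y - s0)) <= Lg * (2 * e)) by (apply Rmult_le_compat_l; lra).
  assert (Lg * (2 * e) <= Lg * (2 * (- G0 / (2 * (Lg + 1))))) by (apply Rmult_le_compat_l; lra).
  assert (Lg * (2 * (- G0 / (2 * (Lg + 1)))) < - G0).
  { replace (Lg * (2 * (- G0 / (2 * (Lg + 1))))) with ((- G0) * (Lg / (Lg + 1))) by (field; lra).
    assert (Lg / (Lg + 1) < 1).
    { apply (Rmult_lt_reg_r (Lg + 1)). lra. unfold Rdiv. rewrite Rmult_assoc, Rinv_l by lra. lra. }
    nra. }
  apply Rabs_le_between in HL. lra.
Qed.

Lemma dneg (P : R -> R) t l : derivable_pt_lim P (- t) l -> derivable_pt_lim (fun s => P (- s)) t (- l).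
Proof.
  intros H.
  assert (H1 : derivable_pt_lim (fun s => - s) t (-1)).
  { exact (derivable_pt_lim_opp id t 1 (derivable_pt_lim_id t)). }
  replace (- l) with (l * -1) by ring.
  exact (derivable_pt_lim_comp (fun s => - s) P t (-1) l H1 H).
Qed.

Theorem lemma5p1
  (ga gs sB q eps Tm Tp bm bp T1 T2 T3 : R)
  (hga : 0 < ga) (hgs : 0 < gs) (hsB : 0 < sB) (hq : 0 < q)
  (heps : 0 < eps < 2)
  (hT : 0 < Tm < Tp) (hb : 0 < bm < bp)
  (hT1 : 0 < T1 < Tm) (hT2 : Tm < T2 < Tp) (hT3 : Tp < T3)
  (hsol : forall T, 0 < T ->
     (sB * (1 - eps / 2) * T ^ 4 = q * coalbedo Tm Tp bm bp T <->
      (T = T1 \/ T = T2 \/ T = T3)))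
  (huniq : exists T0, 0 < T0 /\ sB * T0 ^ 4 = q * coalbedo Tm Tp bm bp T0 /\
     forall T, 0 < T -> sB * T ^ 4 = q * coalbedo Tm Tp bm bp T -> T = T0)
  (a0 s0 : R)
  (hQ : inQ a0 s0)
  (hC : in_boundary (inQ4 eps sB q Tm Tp bm bp) a0 s0)
  (hneq : ~ (Fa eps sB a0 s0 = 0 /\ Fs eps sB q Tm Tp bm bp a0 s0 = 0)) :
  exists (tau : R) (Ta Ts : R -> R),
    0 < tau /\
    Ta 0 = a0 /\ Ts 0 = s0 /\
    (forall t, - tau <= t <= 0 ->
       derivable_pt_lim Ta t (Fa eps sB (Ta t) (Ts t) / ga) /\
       derivable_pt_lim Ts t (Fs eps sB q Tm Tp bm bp (Ta t) (Ts t) / gs)) /\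
    Ts (- tau) = 0 /\ 0 < Ta (- tau).
Proof.
  destruct hQ as [Ha0 Hs0].
  set (vmax := s0 + 1).
  set (U1 := a0 + 1 + vmax * (1 + / eps)).
  set (umax := U1 + (2 * sB * vmax ^ 4 * (gs * vmax / (q * bm)) + 2 * gs * vmax) / ga + 1).
  assert (Hie : 0 < / eps) by (apply Rinv_0_lt_compat; lra).
  assert (hU1 : 0 <= U1 /\ vmax ^ 4 <= eps * U1 ^ 4).
  { assert (A : vmax <= U1) by (unfold U1, vmax; nra).
    assert (B : vmax <= eps * U1).
    { unfold U1. replace (eps * (a0 + 1 + vmax * (1 + / eps))) with (eps * (a0 + 1) + eps * vmax + vmax) by (field; lra).
      unfold vmax. nra. }
    split. unfold vmax in *; lra.
    assert (vmax ^ 3 <= U1 ^ 3) by (apply pow_incr; unfold vmax in *; lra).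
    assert (0 <= vmax ^ 3) by (apply pow_le; unfold vmax; lra).
    replace (vmax ^ 4) with (vmax * vmax ^ 3) by ring.
    replace (eps * U1 ^ 4) with ((eps * U1) * U1 ^ 3) by ring.
    apply Rmult_le_compat; unfold vmax in *; lra. }
  assert (humax : U1 + (2 * sB * vmax ^ 4 * (gs * vmax / (q * bm)) + 2 * gs * vmax) / ga < umax) by (unfold umax; lra).
  assert (HU1a : a0 + 1 <= U1).
  { unfold U1. assert (0 <= vmax * (1 + / eps)) by (unfold vmax; apply Rmult_le_pos; lra). lra. }
  assert (Hum0 : 0 <= umax).
  { pose proof (U1_lt_umax sB q bm bp ga gs umax vmax U1 hga hgs hsB hq hb ltac:(unfold vmax; lra) humax). lra. }
  assert (Hvm0 : 0 <= vmax) by (unfold vmax; lra).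
  set (A1 := 2 * eps * sB / ga). set (B1 := - (eps * sB) / ga). pose (C1 := 0).
  set (A2 := - (eps * sB) / gs). set (B2 := sB / gs). set (C2 := - q / gs).
  set (f1 := Hf Tm Tp bm bp umax vmax A1 B1 C1).
  set (f2 := Hf Tm Tp bm bp umax vmax A2 B2 C2).
  set (K := umax + vmax).
  set (M1 := (Rabs A1 + Rabs B1) * K ^ 4 + Rabs C1 * bp).
  set (M2 := (Rabs A2 + Rabs B2) * K ^ 4 + Rabs C2 * bp).
  set (L1 := 4 * K ^ 3 * (Rabs A1 + Rabs B1) + Rabs C1 * kb Tm Tp bm bp).
  set (L2 := 4 * K ^ 3 * (Rabs A2 + Rabs B2) + Rabs C2 * kb Tm Tp bm bp).
  assert (HK4 : 0 <= K ^ 4) by (apply pow_le; unfold K; lra).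
  assert (HK3 : 0 <= K ^ 3) by (apply pow_le; unfold K; lra).
  pose proof (kb_pos Tm Tp bm bp hT hb) as Hkb.
  assert (HM1 : 0 <= M1).
  { unfold M1. pose proof (Rabs_pos A1). pose proof (Rabs_pos B1). pose proof (Rabs_pos C1).
    apply Rplus_le_le_0_compat; apply Rmult_le_pos; lra. }
  assert (HM2 : 0 <= M2).
  { unfold M2. pose proof (Rabs_pos A2). pose proof (Rabs_pos B2). pose proof (Rabs_pos C2).
    apply Rplus_le_le_0_compat; apply Rmult_le_pos; lra. }
  assert (HL1 : 0 <= L1).
  { unfold L1. pose proof (Rabs_pos A1). pose proof (Rabs_pos B1). pose proof (Rabs_pos C1).
    apply Rplus_le_le_0_compat; apply Rmult_le_pos; lra. }
  assert (HL2 : 0 <= L2).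
  { unfold L2. pose proof (Rabs_pos A2). pose proof (Rabs_pos B2). pose proof (Rabs_pos C2).
    apply Rplus_le_le_0_compat; apply Rmult_le_pos; lra. }
  destruct (picard_global f1 f2 a0 s0 (M1 + M2) (L1 + L2 + 1)) as [P [Q [HP0 [HQ0 HPQ]]]].
  { intros x y. unfold f1. pose proof (Hf_bound Tm Tp bm bp umax vmax hT hb Hum0 Hvm0 A1 B1 C1 x y). fold K in H. fold M1 in H. lra. }
  { intros x y. unfold f2. pose proof (Hf_bound Tm Tp bm bp umax vmax hT hb Hum0 Hvm0 A2 B2 C2 x y). fold K in H. fold M2 in H. lra. }
  { intros x y x' y'. unfold f1. pose proof (Hf_lip Tm Tp bm bp umax vmax hT hb Hum0 Hvm0 A1 B1 C1 x y x' y') as H.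
    fold K in H. fold L1 in H.
    assert (L1 * (Rabs (x - x') + Rabs (y - y')) <= (L1 + L2 + 1) * (Rabs (x - x') + Rabs (y - y'))).
    { apply Rmult_le_compat_r. pose proof (Rabs_pos (x - x')). pose proof (Rabs_pos (y - y')). lra. lra. }
    lra. }
  { intros x y x' y'. unfold f2. pose proof (Hf_lip Tm Tp bm bp umax vmax hT hb Hum0 Hvm0 A2 B2 C2 x y x' y') as H.
    fold K in H. fold L2 in H.
    assert (L2 * (Rabs (x - x') + Rabs (y - y')) <= (L1 + L2 + 1) * (Rabs (x - x') + Rabs (y - y'))).
    { apply Rmult_le_compat_r. pose proof (Rabs_pos (x - x')). pose proof (Rabs_pos (y - y')). lra. lra. }
    lra. }
  { lra. }
  assert (Ef1 : forall t, inbox umax vmax P Q t -> f1 (P t) (Q t) = eps * sB * Pf (P t) (Q t) / ga).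
  { intros t [Hu Hv]. unfold f1, Hf. rewrite !cl_id by lra. unfold A1, B1, C1, Pf. field. lra. }
  assert (Ef2 : forall t, inbox umax vmax P Q t -> f2 (P t) (Q t) = - Gf eps sB q Tm Tp bm bp (P t) (Q t) / gs).
  { intros t [Hu Hv]. unfold f2, Hf. rewrite !cl_id by lra. unfold A2, B2, C2, Gf. field. lra. }
  destruct (dyn_main eps sB q Tm Tp bm bp ga gs umax vmax U1 P Q hga hgs hsB hq heps hT hb
              ltac:(unfold vmax; lra) hU1 humax) with (a0 := a0) (s0 := s0) as [tau [Htau [Hv [Hu Hin]]]].
  - apply deriv_cont_all. intros t. exists (f1 (P t) (Q t)). apply HPQ.
  - apply deriv_cont_all. intros t. exists (f2 (P t) (Q t)). apply HPQ.
  - intros t Ht. rewrite <- Ef1 by auto. apply HPQ.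
  - intros t Ht. rewrite <- Ef2 by auto. apply HPQ.
  - auto.
  - auto.
  - auto.
  - auto.
  - unfold vmax; lra.
  - auto.
  - apply bdry_G; auto.
  - apply (bdry_P eps sB q Tm Tp bm bp); auto.
  - intros [HG HP]. apply hneq. split.
    + unfold Fa. rewrite !pow4_abs by lra. unfold Pf in HP.
      replace (eps * sB * s0 ^ 4 - 2 * eps * sB * a0 ^ 4) with (- (eps * sB) * (2 * a0 ^ 4 - s0 ^ 4)) by ring. rewrite HP. ring.
    + unfold Fs. rewrite !pow4_abs by lra. unfold Gf in HG. lra.
  - exists tau, (fun t => P (- t)), (fun t => Q (- t)).
    split; auto. split. cbv beta. rewrite Ropp_0; auto. split. cbv beta. rewrite Ropp_0; auto.
    split.
    + intros t Ht. assert (Hb : inbox umax vmax P Q (- t)) by (apply Hin; lra).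
      destruct (HPQ (- t)) as [D1 D2].
      split.
      * replace (Fa eps sB (P (- t)) (Q (- t)) / ga) with (- f1 (P (- t)) (Q (- t))).
        apply dneg. auto.
        rewrite Ef1 by auto. destruct Hb as [Hb1 Hb2]. unfold Fa, Pf. rewrite !pow4_abs by lra. field. lra.
      * replace (Fs eps sB q Tm Tp bm bp (P (- t)) (Q (- t)) / gs) with (- f2 (P (- t)) (Q (- t))).
        apply dneg. auto.
        rewrite Ef2 by auto. destruct Hb as [Hb1 Hb2]. unfold Fs, Gf. rewrite !pow4_abs by lra. field. lra.
    + cbv beta. rewrite Ropp_involutive. split; auto.
Qed.
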